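(* For every $n\geq 1$, $s_n\equiv t_n \pmod 2$.
   Context: Rectangulations are combinatorial equivalence classes of tilings of the unit square by axis-parallel rectangles, where two tilings are equivalent if a homeomorphism of the square fixing the four corners and preserving horizontality and verticality of segments takes one to the other. $t_n$ is the number of rectangulations with exactly $n$ tiles, and $s_n$ is the number of rectangulations with exactly $n$ tiles that are fixed by the natural action of the dihedral group $D_8$ of symmetries of the square. *)

(* Defs.v *)
From Stdlib Require Import Reals List Arith.
Import ListNotations.
Open Scope R_scope.

Definition pt := (R * R)%type.

Record rect := mkRect { rx0 : R; rx1 : R; ry0 : R; ry1 : R }.

Definition in_rect (r : rect) (p : pt) : Prop :=
  rx0 r <= fst p <= rx1 r /\ ry0 r <= snd p <= ry1 r.

Definition in_interior (r : rect) (p : pt) : Prop :=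
  rx0 r < fst p < rx1 r /\ ry0 r < snd p < ry1 r.

Definition in_sq (p : pt) : Prop := 0 <= fst p <= 1 /\ 0 <= snd p <= 1.

Definition tiling (n : nat) (T : list rect) : Prop :=
  length T = n /\
  (forall r, In r T -> 0 <= rx0 r < rx1 r /\ rx1 r <= 1 /\
                       0 <= ry0 r < ry1 r /\ ry1 r <= 1) /\
  (forall p, in_sq p -> exists r, In r T /\ in_rect r p) /\
  (forall i j d, (i < length T)%nat -> (j < length T)%nat -> i <> j ->
     forall p, ~ (in_interior (nth i T d) p /\ in_interior (nth j T d) p)).

Definition on_bd (T : list rect) (p : pt) : Prop :=
  exists r, In r T /\ in_rect r p /\ ~ in_interior r p.

Definition dist2 (p q : pt) : R :=
  Rmax (Rabs (fst p - fst q)) (Rabs (snd p - snd q)).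

Definition cont_on_sq (f : pt -> pt) : Prop :=
  forall p, in_sq p -> forall eps, 0 < eps -> exists del, 0 < del /\
    forall q, in_sq q -> dist2 p q < del -> dist2 (f p) (f q) < eps.

Definition homeo_sq (f : pt -> pt) : Prop :=
  (forall p, in_sq p -> in_sq (f p)) /\ cont_on_sq f /\
  exists g : pt -> pt,
    (forall p, in_sq p -> in_sq (g p)) /\ cont_on_sq g /\
    (forall p, in_sq p -> g (f p) = p) /\ (forall q, in_sq q -> f (g q) = q).

Definition fixes_corners (f : pt -> pt) : Prop :=
  f (0, 0) = (0, 0) /\ f (1, 0) = (1, 0) /\ f (0, 1) = (0, 1) /\ f (1, 1) = (1, 1).

(* Combinatorial equivalence: a corner-fixing homeomorphism of the square
   taking every tile of T1 onto a tile of T2 and taking horizontal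
   (resp. vertical) segments of the tiling to horizontal (resp. vertical)
   segments. *)
Definition equiv_tiling (T1 T2 : list rect) : Prop :=
  exists f : pt -> pt,
    homeo_sq f /\ fixes_corners f /\
    (forall r, In r T1 -> exists r', In r' T2 /\
       forall q, in_rect r' q <-> exists p, in_rect r p /\ f p = q) /\
    (forall p q, in_sq p -> in_sq q -> snd p = snd q ->
       (forall t, 0 <= t <= 1 -> on_bd T1 (fst p + t * (fst q - fst p), snd p)) ->
       snd (f p) = snd (f q)) /\
    (forall p q, in_sq p -> in_sq q -> fst p = fst q ->
       (forall t, 0 <= t <= 1 -> on_bd T1 (fst p, snd p + t * (snd q - snd p))) ->
       fst (f p) = fst (f q)).

(* The dihedral group D_8 of the square: an element is encoded by
   (sw, fx, fy): first reflect x -> 1-x if fx, then y -> 1-y if fy,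
   then swap the coordinates if sw.  These are the 8 symmetries. *)
Definition d8 := (bool * bool * bool)%type.

Definition act_rect (g : d8) (r : rect) : rect :=
  let '(sw, fx, fy) := g in
  let '(a, b) := if fx then (1 - rx1 r, 1 - rx0 r) else (rx0 r, rx1 r) in
  let '(c, d) := if fy then (1 - ry1 r, 1 - ry0 r) else (ry0 r, ry1 r) in
  if sw then mkRect c d a b else mkRect a b c d.

Definition act_tiling (g : d8) (T : list rect) : list rect := map (act_rect g) T.

Definition d8_fixed (T : list rect) : Prop :=
  forall g : d8, equiv_tiling (act_tiling g T) T.

(* k is the number of equivalence classes of n-tile tilings satisfying the
   (class-invariant) property P: there is a list of k pairwise inequivalent
   such tilings representing every class. *)
Definition num_classes (P : list rect -> Prop) (n k : nat) : Prop :=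
  exists L : list (list rect),
    length L = k /\
    (forall T, In T L -> tiling n T /\ P T) /\
    (forall i j d, (i < length L)%nat -> (j < length L)%nat -> i <> j ->
        ~ equiv_tiling (nth i L d) (nth j L d)) /\
    (forall T, tiling n T -> P T -> exists T', In T' L /\ equiv_tiling T T').

Definition is_t (n t : nat) : Prop := num_classes (fun _ => True) n t.
Definition is_s (n s : nat) : Prop := num_classes d8_fixed n s.

(* Main.v *)
Require Import Defs.
From Stdlib Require Import Reals List Arith Lra Lia Classical ClassicalEpsilon.
Import ListNotations.
Open Scope R_scope.

Definition cI (k : R -> R) (a b : R) := forall t, a <= t <= b -> forall eps, 0 < eps ->
  exists del, 0 < del /\ forall s, a <= s <= b -> Rabs (t - s) < del -> Rabs (k t - k s) < eps.

Lemma first_hit : forall k a b w, a <= b -> cI k a b -> k a < w -> w < k b ->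
  exists u, a <= u <= b /\ k u = w /\ (forall s, a <= s < u -> k s < w).
Proof.
  intros k a b w Hab Hc Ha Hb.
  set (S := fun t => a <= t <= b /\ forall s, a <= s <= t -> k s < w).
  assert (HSa : S a). { split. lra. intros s Hs. replace s with a by lra. exact Ha. }
  assert (Hbd : bound S). { exists b. intros t [Ht _]. lra. }
  destruct (completeness S Hbd (ex_intro _ a HSa)) as [m [Hub Hlub]].
  assert (Ham : a <= m) by (apply Hub; exact HSa).
  assert (Hmb : m <= b) by (apply Hlub; intros t [Ht _]; lra).
  assert (C1 : forall s, a <= s < m -> k s < w).
  { intros s Hs. destruct (classic (exists t, S t /\ s < t)) as [[t [[Ht1 Ht2] Hst]]|Hn].
    - apply Ht2; lra.
    - assert (m <= s). { apply Hlub. intros t Ht. destruct (Rle_dec t s). lra. exfalso; apply Hn; exists t; split; auto; lra. } lra. }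
  exists m. split. lra. split.
  - destruct (Rtotal_order (k m) w) as [Hlt|[Heq|Hgt]]; [exfalso|exact Heq|exfalso].
    + assert (Hmb' : m < b). { destruct (Req_dec m b). subst. lra. lra. }
      destruct (Hc m (conj Ham Hmb) (w - k m)) as [d [Hd Hd2]]. lra.
      set (t' := Rmin (m + d/2) b).
      assert (S t').
      { split. unfold t'. split. apply Rmin_glb; lra. apply Rmin_r.
        intros s Hs. destruct (Rlt_dec s m). apply C1; lra.
        assert (Hsm : m <= s <= t') by lra.
        assert (s <= m + d/2) by (pose proof (Rmin_l (m+d/2) b); unfold t' in *; lra).
        assert (s <= b) by (pose proof (Rmin_r (m+d/2) b); unfold t' in *; lra).
        specialize (Hd2 s ltac:(lra)). assert (Rabs (m - s) < d). { rewrite Rabs_left1; lra. }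
        specialize (Hd2 H1). apply Rabs_def2 in Hd2. lra. }
      assert (Htm : t' <= m) by (apply Hub; auto).
      unfold t' in Htm. destruct (Rle_dec (m + d/2) b). rewrite Rmin_left in Htm; lra. rewrite Rmin_right in Htm; lra.
    + assert (Ham' : a < m). { destruct (Req_dec a m). subst. lra. lra. }
      destruct (Hc m (conj Ham Hmb) (k m - w)) as [d [Hd Hd2]]. lra.
      set (s := Rmax (m - d/2) a).
      assert (a <= s < m). { unfold s. split. apply Rmax_r. apply Rmax_lub_lt; lra. }
      assert (m - d/2 <= s) by apply Rmax_l.
      specialize (Hd2 s ltac:(lra)). assert (Rabs (m - s) < d) by (rewrite Rabs_right; lra).
      specialize (Hd2 H1). apply Rabs_def2 in Hd2. specialize (C1 s H). lra.
  - exact C1.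
Qed.

Lemma cI_opp : forall k a b, cI k a b -> cI (fun t => - k t) a b.
Proof.
  intros k a b H t Ht eps He. destruct (H t Ht eps He) as [d [Hd H2]]. exists d. split; auto.
  intros s Hs Hts. specialize (H2 s Hs Hts).
  replace (- k t - - k s) with (- (k t - k s)) by ring. rewrite Rabs_Ropp. auto.
Qed.

Lemma IVT_cI : forall k a b w, a <= b -> cI k a b -> Rmin (k a) (k b) <= w <= Rmax (k a) (k b) ->
  exists u, a <= u <= b /\ k u = w.
Proof.
  intros k a b w Hab Hc Hw.
  destruct (Req_dec w (k a)) as [E|Na]. exists a. split. lra. auto.
  destruct (Req_dec w (k b)) as [E|Nb]. exists b. split. lra. auto.
  destruct (Rle_dec (k a) (k b)).
  - rewrite Rmin_left in Hw by lra. rewrite Rmax_right in Hw by lra.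
    destruct (first_hit k a b w Hab Hc) as [u [Hu [Hku _]]]; try lra. eauto.
  - rewrite Rmin_right in Hw by lra. rewrite Rmax_left in Hw by lra.
    destruct (first_hit (fun t => - k t) a b (-w) Hab (cI_opp k a b Hc)) as [u [Hu [Hku _]]]; simpl; try lra.
    exists u. split; auto. lra.
Qed.

Lemma away : forall (l : list R) w, ~ In w l -> exists e, 0 < e /\ forall v, Rabs (v - w) < e -> ~ In v l.
Proof.
  induction l as [|c l IH]; intros w Hw.
  - exists 1. split. lra. intros v _ [].
  - assert (Hc : c <> w) by (intro; apply Hw; left; auto).
    assert (Hl : ~ In w l) by (intro; apply Hw; right; auto).
    destruct (IH w Hl) as [e [He H]].
    exists (Rmin e (Rabs (c - w))). split.
    + apply Rmin_glb_lt; auto. apply Rabs_pos_lt. intro; apply Hc; lra.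
    + intros v Hv [E|Hin].
      * subst. pose proof (Rmin_r e (Rabs (v - w))). lra.
      * apply (H v); auto. pose proof (Rmin_l e (Rabs (c - w))). lra.
Qed.

Lemma avoid : forall (l : list R) a b, a < b -> exists w, a < w < b /\ ~ In w l.
Proof.
  induction l as [|c l IH]; intros a b Hab.
  - exists ((a+b)/2). split. lra. intros [].
  - destruct (Rlt_dec a c) as [Hac|Hac]; [destruct (Rlt_dec c b) as [Hcb|Hcb]|].
    + destruct (IH a c Hac) as [w [Hw Hn]]. exists w. split. lra.
      intros [E|Hi]; [lra|auto].
    + destruct (IH a b Hab) as [w [Hw Hn]]. exists w. split. lra.
      intros [E|Hi]; [lra|auto].
    + destruct (IH a b Hab) as [w [Hw Hn]]. exists w. split. lra.
      intros [E|Hi]; [lra|auto].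
Qed.

Lemma finite_const : forall k a b (l : list R), a <= b -> cI k a b ->
  (forall t, a <= t <= b -> In (k t) l) -> k a = k b.
Proof.
  intros k a b l Hab Hc Hin.
  destruct (Rtotal_order (k a) (k b)) as [H|[H|H]]; auto; exfalso.
  - destruct (avoid l (k a) (k b) H) as [w [Hw Hn]].
    destruct (IVT_cI k a b w Hab Hc) as [u [Hu Hku]].
    split. apply Rle_trans with (k a). apply Rmin_l. lra. apply Rle_trans with (k b). lra. apply Rmax_r.
    apply Hn. rewrite <- Hku. auto.
  - destruct (avoid l (k b) (k a) H) as [w [Hw Hn]].
    destruct (IVT_cI k a b w Hab Hc) as [u [Hu Hku]].
    split. apply Rle_trans with (k b). apply Rmin_r. lra. apply Rle_trans with (k a). lra. apply Rmax_l.
    apply Hn. rewrite <- Hku. auto.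
Qed.

Lemma cI_sub : forall k a b a' b', a <= a' -> b' <= b -> cI k a b -> cI k a' b'.
Proof.
  intros k a b a' b' H1 H2 H t Ht eps He. destruct (H t ltac:(lra) eps He) as [d [Hd Hd2]].
  exists d. split; auto. intros s Hs. apply Hd2. lra.
Qed.

Lemma Rabs_le_inv : forall a b, Rabs a <= b -> - b <= a <= b.
Proof. intros a b H. split_Rabs; lra. Qed.
Definition good (r : rect) := 0 <= rx0 r < rx1 r /\ rx1 r <= 1 /\ 0 <= ry0 r < ry1 r /\ ry1 r <= 1.
Definition sqbd (p : pt) := fst p = 0 \/ fst p = 1 \/ snd p = 0 \/ snd p = 1.

Lemma til_good : forall n T r, tiling n T -> In r T -> good r.
Proof. intros n T r [_ [H _]] Hr. apply H; auto. Qed.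

Lemma rect_in_sq : forall r p, good r -> in_rect r p -> in_sq p.
Proof. intros r p G H. unfold good, in_rect, in_sq in *. lra. Qed.

Lemma int_in_rect : forall r p, in_interior r p -> in_rect r p.
Proof. unfold in_interior, in_rect. intros; lra. Qed.

Lemma til_disj : forall n T d i j p, tiling n T -> (i < length T)%nat -> (j < length T)%nat -> i <> j ->
  in_interior (nth i T d) p -> in_rect (nth j T d) p -> False.
Proof.
  intros n T d i j p HT Hi Hj Hij H1 H2.
  assert (G : good (nth j T d)) by (eapply til_good; eauto; apply nth_In; auto).
  destruct HT as [_ [_ [_ HD]]].
  set (r1 := nth i T d) in *. set (r2 := nth j T d) in *.
  unfold good, in_interior, in_rect in *.
  set (e := Rmin (Rmin (fst p - rx0 r1) (rx1 r1 - fst p)) (Rmin (snd p - ry0 r1) (ry1 r1 - snd p))).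
  assert (He : 0 < e). { unfold e. repeat apply Rmin_glb_lt; lra. }
  assert (He1 : e <= fst p - rx0 r1 /\ e <= rx1 r1 - fst p /\ e <= snd p - ry0 r1 /\ e <= ry1 r1 - snd p).
  { unfold e. repeat split.
    - eapply Rle_trans; [apply Rmin_l|apply Rmin_l].
    - eapply Rle_trans; [apply Rmin_l|apply Rmin_r].
    - eapply Rle_trans; [apply Rmin_r|apply Rmin_l].
    - eapply Rle_trans; [apply Rmin_r|apply Rmin_r]. }
  set (s := Rmin (e/2) (1/2)).
  assert (Hs : 0 < s /\ s <= e/2 /\ s <= 1/2). { unfold s. split. apply Rmin_glb_lt; lra. split. apply Rmin_l. apply Rmin_r. }
  set (cx := (rx0 r2 + rx1 r2)/2). set (cy := (ry0 r2 + ry1 r2)/2).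
  apply (HD i j d Hi Hj Hij (fst p + s * (cx - fst p), snd p + s * (cy - snd p))).
  unfold in_interior; simpl. fold r1 r2. unfold cx, cy.
  assert (Ax : Rabs (s * ((rx0 r2 + rx1 r2) / 2 - fst p)) <= s).
  { rewrite Rabs_mult. rewrite (Rabs_right s) by lra. rewrite <- (Rmult_1_r s) at 2.
    apply Rmult_le_compat_l. lra. apply Rabs_le. lra. }
  assert (Ay : Rabs (s * ((ry0 r2 + ry1 r2) / 2 - snd p)) <= s).
  { rewrite Rabs_mult. rewrite (Rabs_right s) by lra. rewrite <- (Rmult_1_r s) at 2.
    apply Rmult_le_compat_l. lra. apply Rabs_le. lra. }
  apply Rabs_le_inv in Ax. apply Rabs_le_inv in Ay.
  assert (0 < s * ((rx0 r2 + rx1 r2) / 2 - rx0 r2)) by (apply Rmult_lt_0_compat; lra).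
  assert (0 <= s * (fst p - rx0 r2)) by (apply Rmult_le_pos; lra).
  assert (0 < s * (rx1 r2 - (rx0 r2 + rx1 r2) / 2)) by (apply Rmult_lt_0_compat; lra).
  assert (0 <= s * (rx1 r2 - fst p)) by (apply Rmult_le_pos; lra).
  assert (0 < s * ((ry0 r2 + ry1 r2) / 2 - ry0 r2)) by (apply Rmult_lt_0_compat; lra).
  assert (0 <= s * (snd p - ry0 r2)) by (apply Rmult_le_pos; lra).
  assert (0 < s * (ry1 r2 - (ry0 r2 + ry1 r2) / 2)) by (apply Rmult_lt_0_compat; lra).
  assert (0 <= s * (ry1 r2 - snd p)) by (apply Rmult_le_pos; lra).
  assert (s <= 1) by lra.
  split; split; split; nra.
Qed.

Lemma closed_away : forall r p, ~ in_rect r p -> exists e, 0 < e /\ forall q,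
  Rabs (fst q - fst p) < e -> Rabs (snd q - snd p) < e -> ~ in_rect r q.
Proof.
  intros r p H. unfold in_rect in *.
  destruct (Rle_dec (rx0 r) (fst p)); [destruct (Rle_dec (fst p) (rx1 r))|].
  destruct (Rle_dec (ry0 r) (snd p)); [destruct (Rle_dec (snd p) (ry1 r))|].
  - exfalso; apply H; lra.
  - exists (snd p - ry1 r). split. lra. intros q _ Hq Hin. apply Rabs_def2 in Hq. lra.
  - exists (ry0 r - snd p). split. lra. intros q _ Hq Hin. apply Rabs_def2 in Hq. lra.
  - exists (fst p - rx1 r). split. lra. intros q Hq _ Hin. apply Rabs_def2 in Hq. lra.
  - exists (rx0 r - fst p). split. lra. intros q Hq _ Hin. apply Rabs_def2 in Hq. lra.
Qed.

Lemma closed_away_list : forall (T : list rect) p, exists e, 0 < e /\ forall r, In r T -> ~ in_rect r p ->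
  forall q, Rabs (fst q - fst p) < e -> Rabs (snd q - snd p) < e -> ~ in_rect r q.
Proof.
  induction T as [|r T IH]; intros p.
  - exists 1. split. lra. intros r [].
  - destruct (IH p) as [e [He H]].
    destruct (classic (in_rect r p)) as [Hr|Hr].
    + exists e. split; auto. intros r' [E|Hi]; [subst; tauto|]. apply H; auto.
    + destruct (closed_away r p Hr) as [e' [He' H']].
      exists (Rmin e e'). split. apply Rmin_glb_lt; auto.
      intros r' [E|Hi] Hn q H1 H2.
      * subst. apply H'; eapply Rlt_le_trans; eauto; apply Rmin_r.
      * apply (H r' Hi Hn q); eapply Rlt_le_trans; eauto; apply Rmin_l.
Qed.

Definition two_tiles (T : list rect) (p : pt) := exists i j, (i < length T)%nat /\ (j < length T)%nat /\ i <> j /\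
  forall d, in_rect (nth i T d) p /\ in_rect (nth j T d) p.

Lemma nth_indep_rect : forall (T : list rect) i d d', (i < length T)%nat -> nth i T d = nth i T d'.
Proof. intros; apply nth_indep; auto. Qed.

Lemma bd_char : forall n T p, tiling n T -> on_bd T p -> in_sq p /\ (sqbd p \/ two_tiles T p).
Proof.
  intros n T p HT [r [Hr [Hin Hni]]].
  pose proof (til_good n T r HT Hr) as G.
  split. eapply rect_in_sq; eauto.
  destruct (classic (sqbd p)) as [Hs|Hs]; [left; auto|right].
  unfold sqbd in Hs. unfold good, in_rect, in_interior in *.
  assert (P1 : 0 < fst p < 1 /\ 0 < snd p < 1) by (split; split; apply Rnot_le_lt; intro; apply Hs; lra).
  destruct (closed_away_list T p) as [e [He HA]].
  set (m := Rmin (Rmin (fst p) (1 - fst p)) (Rmin (snd p) (1 - snd p))).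
  assert (Hm : 0 < m). { unfold m. repeat apply Rmin_glb_lt; lra. }
  assert (Hm1 : m <= fst p /\ m <= 1 - fst p /\ m <= snd p /\ m <= 1 - snd p).
  { unfold m. repeat split.
    - eapply Rle_trans; [apply Rmin_l|apply Rmin_l].
    - eapply Rle_trans; [apply Rmin_l|apply Rmin_r].
    - eapply Rle_trans; [apply Rmin_r|apply Rmin_l].
    - eapply Rle_trans; [apply Rmin_r|apply Rmin_r]. }
  set (h := Rmin e m / 2).
  assert (Hh : 0 < h /\ h < e /\ h < m).
  { unfold h. pose proof (Rmin_l e m). pose proof (Rmin_r e m). pose proof (Rmin_glb_lt e m 0). lra. }
  assert (KEY : forall q, Rabs (fst q - fst p) <= h -> Rabs (snd q - snd p) <= h -> ~ in_rect r q -> two_tiles T p).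
  { intros q Hq1 Hq2 Hnq.
    assert (Sq : in_sq q). { apply Rabs_le_inv in Hq1. apply Rabs_le_inv in Hq2. unfold in_sq. lra. }
    destruct HT as [Hl [Hg [Hc Hd]]].
    destruct (Hc q Sq) as [r2 [Hr2 Hq]].
    assert (Hp2 : in_rect r2 p).
    { destruct (classic (in_rect r2 p)) as [X|X]; auto. exfalso.
      apply (HA r2 Hr2 X q); auto; lra. }
    destruct (In_nth T r r Hr) as [i [Hi Ei]].
    destruct (In_nth T r2 r Hr2) as [j [Hj Ej]].
    exists i, j. split; auto. split; auto. split.
    - intro E; subst j. rewrite Ei in Ej. subst. auto.
    - intro d. rewrite (nth_indep_rect T i d r Hi), (nth_indep_rect T j d r Hj), Ei, Ej.
      unfold in_rect in *. split; lra. }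
  destruct (Req_dec (fst p) (rx0 r)).
  { apply (KEY (fst p - h, snd p)); simpl.
    - replace (fst p - h - fst p) with (- h) by ring. rewrite Rabs_Ropp, Rabs_right; lra.
    - replace (snd p - snd p) with 0 by ring. rewrite Rabs_R0; lra.
    - unfold in_rect; simpl. lra. }
  destruct (Req_dec (fst p) (rx1 r)).
  { apply (KEY (fst p + h, snd p)); simpl.
    - replace (fst p + h - fst p) with h by ring. rewrite Rabs_right; lra.
    - replace (snd p - snd p) with 0 by ring. rewrite Rabs_R0; lra.
    - unfold in_rect; simpl. lra. }
  destruct (Req_dec (snd p) (ry0 r)).
  { apply (KEY (fst p, snd p - h)); simpl.
    - replace (fst p - fst p) with 0 by ring. rewrite Rabs_R0; lra.
    - replace (snd p - h - snd p) with (- h) by ring. rewrite Rabs_Ropp, Rabs_right; lra.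
    - unfold in_rect; simpl. lra. }
  destruct (Req_dec (snd p) (ry1 r)).
  { apply (KEY (fst p, snd p + h)); simpl.
    - replace (fst p - fst p) with 0 by ring. rewrite Rabs_R0; lra.
    - replace (snd p + h - snd p) with h by ring. rewrite Rabs_right; lra.
    - unfold in_rect; simpl. lra. }
  exfalso. apply Hni. lra.
Qed.

Lemma bd_of : forall n T p, tiling n T -> in_sq p -> sqbd p \/ two_tiles T p -> on_bd T p.
Proof.
  intros n T p HT Hs [Hb|[i [j [Hi [Hj [Hij H]]]]]].
  - destruct HT as [Hl [Hg [Hc Hd]]]. destruct (Hc p Hs) as [r [Hr Hin]].
    exists r. split; auto. split; auto. pose proof (Hg r Hr). unfold sqbd, in_interior in *. lra.
  - destruct (H (mkRect 0 0 0 0)) as [H1 H2].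
    exists (nth i T (mkRect 0 0 0 0)). split. apply nth_In; auto. split; auto.
    intro X. exact (til_disj n T _ i j p HT Hi Hj Hij X H2).
Qed.
Definition injsq (F : pt -> pt) := forall p q, in_sq p -> in_sq q -> F p = F q -> p = q.
Definition sqpres (F : pt -> pt) := forall p, in_sq p -> in_sq (F p).
Definition tmap (F : pt -> pt) T1 T2 := forall r, In r T1 -> exists r', In r' T2 /\
  forall q, in_rect r' q <-> exists p, in_rect r p /\ F p = q.
Definition hprop (F : pt -> pt) T := forall p q, in_sq p -> in_sq q -> snd p = snd q ->
  (forall t, 0 <= t <= 1 -> on_bd T (fst p + t * (fst q - fst p), snd p)) -> snd (F p) = snd (F q).
Definition vprop (F : pt -> pt) T := forall p q, in_sq p -> in_sq q -> fst p = fst q ->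
  (forall t, 0 <= t <= 1 -> on_bd T (fst p, snd p + t * (snd q - snd p))) -> fst (F p) = fst (F q).
Definition hseg (p q : pt) (t : R) : pt := (fst p + t * (fst q - fst p), snd p).
Definition vseg (p q : pt) (t : R) : pt := (fst p, snd p + t * (snd q - snd p)).

Lemma equiv_unfold : forall T1 T2, equiv_tiling T1 T2 <-> exists f, homeo_sq f /\ fixes_corners f /\
  tmap f T1 T2 /\ hprop f T1 /\ vprop f T1.
Proof. intros. unfold equiv_tiling, tmap, hprop, vprop. tauto. Qed.

Lemma center_int : forall r, good r -> in_interior r ((rx0 r + rx1 r)/2, (ry0 r + ry1 r)/2).
Proof. intros r G. unfold good, in_interior in *. simpl. lra. Qed.

Lemma tmap_inj : forall n1 n2 T1 T2 F d i j r1 r2, tiling n1 T1 -> tiling n2 T2 -> injsq F ->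
  (i < length T1)%nat -> (j < length T1)%nat -> i <> j ->
  (forall q, in_rect r1 q <-> exists p, in_rect (nth i T1 d) p /\ F p = q) ->
  (forall q, in_rect r2 q <-> exists p, in_rect (nth j T1 d) p /\ F p = q) -> r1 <> r2.
Proof.
  intros n1 n2 T1 T2 F d i j r1 r2 H1 H2 Hinj Hi Hj Hij E1 E2 Heq. subst r2.
  assert (Gi : good (nth i T1 d)) by (apply (til_good n1 T1); auto; apply nth_In; auto).
  assert (Gj : good (nth j T1 d)) by (apply (til_good n1 T1); auto; apply nth_In; auto).
  set (c := ((rx0 (nth i T1 d) + rx1 (nth i T1 d))/2, (ry0 (nth i T1 d) + ry1 (nth i T1 d))/2)).
  assert (Hc : in_interior (nth i T1 d) c) by (apply center_int; auto).
  assert (X : in_rect r1 (F c)) by (apply E1; exists c; split; auto; apply int_in_rect; auto).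
  apply E2 in X. destruct X as [p [Hp Ep]].
  assert (p = c). { apply Hinj; [apply (rect_in_sq (nth j T1 d)); auto | apply (rect_in_sq (nth i T1 d)); auto; apply int_in_rect; auto | auto]. }
  subst p. exact (til_disj n1 T1 d i j c H1 Hi Hj Hij Hc Hp).
Qed.

Lemma bd_pres : forall n1 n2 T1 T2 F, tiling n1 T1 -> tiling n2 T2 -> sqpres F -> injsq F -> tmap F T1 T2 ->
  (forall p, in_sq p -> sqbd p -> sqbd (F p)) -> forall p, on_bd T1 p -> on_bd T2 (F p).
Proof.
  intros n1 n2 T1 T2 F H1 H2 Hs Hinj Ht Hb p Hp.
  destruct (bd_char n1 T1 p H1 Hp) as [Sp [B|[i [j [Hi [Hj [Hij Hin]]]]]]].
  - apply (bd_of n2); auto.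
  - set (d := mkRect 0 0 0 0).
    destruct (Ht (nth i T1 d)) as [r1 [Hr1 E1]]. apply nth_In; auto.
    destruct (Ht (nth j T1 d)) as [r2 [Hr2 E2]]. apply nth_In; auto.
    assert (N : r1 <> r2) by exact (tmap_inj n1 n2 T1 T2 F d i j r1 r2 H1 H2 Hinj Hi Hj Hij E1 E2).
    destruct (Hin d) as [Pi Pj].
    assert (Q1 : in_rect r1 (F p)) by (apply E1; eauto).
    assert (Q2 : in_rect r2 (F p)) by (apply E2; eauto).
    apply (bd_of n2); auto. right.
    destruct (In_nth T2 r1 d Hr1) as [a [Ha Ea]].
    destruct (In_nth T2 r2 d Hr2) as [b [Hb' Eb]].
    exists a, b. split; auto. split; auto. split.
    + intro; subst b. apply N. rewrite <- Ea, <- Eb. auto.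
    + intro d'. rewrite (nth_indep_rect T2 a d' d Ha), (nth_indep_rect T2 b d' d Hb'), Ea, Eb. auto.
Qed.

Lemma sqbd_pres : forall n T f, tiling n T -> fixes_corners f -> hprop f T -> vprop f T ->
  forall p, in_sq p -> sqbd p -> sqbd (f p).
Proof.
  intros n T f HT [C00 [C10 [C01 C11]]] Hh Hv p Sp Bp.
  assert (OB : forall x, in_sq x -> sqbd x -> on_bd T x) by (intros; apply (bd_of n); auto).
  unfold in_sq, sqbd in *.
  destruct Bp as [B|[B|[B|B]]].
  - left. pose proof (Hv (0,0) p) as X. rewrite C00 in X. simpl in X. rewrite <- X; auto.
    unfold in_sq; simpl; lra. intros t Ht. apply OB; unfold in_sq, sqbd; simpl; [|lra]. split. lra.
    split. apply Rplus_le_le_0_compat. lra. apply Rmult_le_pos; lra.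
    assert (t * (snd p - 0) <= 1 * 1) by (apply Rmult_le_compat; lra). lra.
  - right; left. pose proof (Hv (1,0) p) as X. rewrite C10 in X. simpl in X. rewrite <- X; auto.
    unfold in_sq; simpl; lra. intros t Ht. apply OB; unfold in_sq, sqbd; simpl; [|lra]. split. lra.
    split. apply Rplus_le_le_0_compat. lra. apply Rmult_le_pos; lra.
    assert (t * (snd p - 0) <= 1 * 1) by (apply Rmult_le_compat; lra). lra.
  - right; right; left. pose proof (Hh (0,0) p) as X. rewrite C00 in X. simpl in X. rewrite <- X; auto.
    unfold in_sq; simpl; lra. intros t Ht. apply OB; unfold in_sq, sqbd; simpl; [|lra]. split; [|lra].
    split. apply Rplus_le_le_0_compat. lra. apply Rmult_le_pos; lra.
    assert (t * (fst p - 0) <= 1 * 1) by (apply Rmult_le_compat; lra). lra.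
  - right; right; right. pose proof (Hh (0,1) p) as X. rewrite C01 in X. simpl in X. rewrite <- X; auto.
    unfold in_sq; simpl; lra. intros t Ht. apply OB; unfold in_sq, sqbd; simpl; [|lra]. split; [|lra].
    split. apply Rplus_le_le_0_compat. lra. apply Rmult_le_pos; lra.
    assert (t * (fst p - 0) <= 1 * 1) by (apply Rmult_le_compat; lra). lra.
Qed.

Lemma homeo_parts : forall f, homeo_sq f -> sqpres f /\ cont_on_sq f /\ injsq f.
Proof.
  intros f [Hs [Hc [g [Hgs [Hgc [Hgf Hfg]]]]]]. split; auto. split; auto.
  intros p q Sp Sq E. rewrite <- (Hgf p Sp), <- (Hgf q Sq), E. auto.
Qed.

Lemma dist2_fst : forall a b, Rabs (fst a - fst b) <= dist2 a b.
Proof. intros; apply Rmax_l. Qed.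
Lemma dist2_snd : forall a b, Rabs (snd a - snd b) <= dist2 a b.
Proof. intros; apply Rmax_r. Qed.
Lemma dist2_lt : forall a b d, Rabs (fst a - fst b) < d -> Rabs (snd a - snd b) < d -> dist2 a b < d.
Proof. intros; apply Rmax_lub_lt; auto. Qed.

Lemma in_sq_conv : forall a b t, 0 <= a <= 1 -> 0 <= b <= 1 -> 0 <= t <= 1 -> 0 <= a + t * (b - a) <= 1.
Proof.
  intros a b t Ha Hb Ht.
  replace (a + t * (b - a)) with ((1 - t) * a + t * b) by ring.
  split. apply Rplus_le_le_0_compat; apply Rmult_le_pos; lra.
  assert ((1 - t) * a <= (1 - t) * 1) by (apply Rmult_le_compat_l; lra).
  assert (t * b <= t * 1) by (apply Rmult_le_compat_l; lra). lra.
Qed.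

Lemma hseg_sq : forall p q t, in_sq p -> in_sq q -> 0 <= t <= 1 -> in_sq (hseg p q t).
Proof. intros p q t [Hp1 Hp2] [Hq1 Hq2] Ht. split; simpl; auto. apply in_sq_conv; auto. Qed.
Lemma vseg_sq : forall p q t, in_sq p -> in_sq q -> 0 <= t <= 1 -> in_sq (vseg p q t).
Proof. intros p q t [Hp1 Hp2] [Hq1 Hq2] Ht. split; simpl; auto. apply in_sq_conv; auto. Qed.

Lemma lin_close : forall a b t s d, Rabs (b - a) <= 1 -> Rabs (t - s) < d ->
  Rabs ((a + t * (b - a)) - (a + s * (b - a))) < d \/ Rabs ((a + t * (b - a)) - (a + s * (b - a))) <= Rabs (t - s).
Proof.
  intros. right. replace ((a + t * (b - a)) - (a + s * (b - a))) with ((t - s) * (b - a)) by ring.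
  rewrite Rabs_mult. rewrite <- (Rmult_1_r (Rabs (t - s))) at 2. apply Rmult_le_compat_l. apply Rabs_pos. auto.
Qed.

Lemma cont_seg : forall F (seg : R -> pt), cont_on_sq F -> (forall t, 0 <= t <= 1 -> in_sq (seg t)) ->
  (forall t s, dist2 (seg t) (seg s) <= Rabs (t - s)) ->
  cI (fun t => fst (F (seg t))) 0 1 /\ cI (fun t => snd (F (seg t))) 0 1.
Proof.
  intros F seg Hc Hs Hd. split; intros t Ht eps He;
  destruct (Hc (seg t) (Hs t Ht) eps He) as [d [Hd0 H]]; exists d; (split; [auto|]); intros s Hs' Hts.
  - assert (X : dist2 (seg t) (seg s) < d) by (eapply Rle_lt_trans; [apply Hd|auto]).
    specialize (H (seg s) (Hs s Hs') X). eapply Rle_lt_trans; [apply dist2_fst|exact H].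
  - assert (X : dist2 (seg t) (seg s) < d) by (eapply Rle_lt_trans; [apply Hd|auto]).
    specialize (H (seg s) (Hs s Hs') X). eapply Rle_lt_trans; [apply dist2_snd|exact H].
Qed.

Lemma hseg_dist : forall p q t s, in_sq p -> in_sq q -> dist2 (hseg p q t) (hseg p q s) <= Rabs (t - s).
Proof.
  intros p q t s [Hp _] [Hq _]. unfold dist2, hseg; simpl. apply Rmax_lub.
  - replace (fst p + t * (fst q - fst p) - (fst p + s * (fst q - fst p))) with ((t - s) * (fst q - fst p)) by ring.
    rewrite Rabs_mult.
    assert (Rabs (fst q - fst p) <= 1) by (apply Rabs_le; lra).
    rewrite <- (Rmult_1_r (Rabs (t - s))) at 2. apply Rmult_le_compat_l; auto. apply Rabs_pos.
  - replace (snd p - snd p) with 0 by ring. rewrite Rabs_R0. apply Rabs_pos.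
Qed.

Lemma vseg_dist : forall p q t s, in_sq p -> in_sq q -> dist2 (vseg p q t) (vseg p q s) <= Rabs (t - s).
Proof.
  intros p q t s [_ Hp] [_ Hq]. unfold dist2, vseg; simpl. apply Rmax_lub.
  - replace (fst p - fst p) with 0 by ring. rewrite Rabs_R0. apply Rabs_pos.
  - replace (snd p + t * (snd q - snd p) - (snd p + s * (snd q - snd p))) with ((t - s) * (snd q - snd p)) by ring.
    rewrite Rabs_mult.
    assert (Rabs (snd q - snd p) <= 1) by (apply Rabs_le; lra).
    rewrite <- (Rmult_1_r (Rabs (t - s))) at 2. apply Rmult_le_compat_l; auto. apply Rabs_pos.
Qed.

Lemma pt_eq : forall a b c d : R, a = c -> b = d -> (a, b) = (c, d).
Proof. intros; subst; auto. Qed.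

Lemma hseg0 : forall p q, hseg p q 0 = p.
Proof. intros [a b] q. unfold hseg; simpl. apply pt_eq; ring. Qed.
Lemma hseg1 : forall p q, snd p = snd q -> hseg p q 1 = q.
Proof. intros [a b] [c d] E. unfold hseg; simpl in *. apply pt_eq; [ring|auto]. Qed.
Lemma vseg0 : forall p q, vseg p q 0 = p.
Proof. intros [a b] q. unfold vseg; simpl. apply pt_eq; ring. Qed.
Lemma vseg1 : forall p q, fst p = fst q -> vseg p q 1 = q.
Proof. intros [a b] [c d] E. unfold vseg; simpl in *. apply pt_eq; [auto|ring]. Qed.
Lemma conv_between : forall a b t, 0 <= t <= 1 -> Rmin a b <= a + t * (b - a) <= Rmax a b.
Proof.
  intros a b t Ht. destruct (Rle_dec a b).
  - rewrite Rmin_left, Rmax_right by lra. split; nra.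
  - rewrite Rmin_right, Rmax_left by lra. split; nra.
Qed.

Lemma hcomp : forall T1 T2 f h, sqpres f -> cont_on_sq f -> (forall p, on_bd T1 p -> on_bd T2 (f p)) ->
  hprop f T1 -> hprop h T2 -> hprop (fun p => h (f p)) T1.
Proof.
  intros T1 T2 f h Sf Cf Bf Hf Hh p q Sp Sq E Hseg.
  assert (Eab : snd (f p) = snd (f q)) by (apply Hf; auto).
  apply Hh; auto. intros t Ht.
  destruct (cont_seg f (hseg p q) Cf (fun u Hu => hseg_sq p q u Sp Sq Hu) (fun u v => hseg_dist p q u v Sp Sq)) as [Ck _].
  destruct (IVT_cI (fun u => fst (f (hseg p q u))) 0 1 (fst (f p) + t * (fst (f q) - fst (f p)))) as [u [Hu Hku]].
  lra. exact Ck. simpl. rewrite hseg0, hseg1 by auto. apply conv_between; auto.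
  simpl in Hku.
  assert (Hs2 : snd (f p) = snd (f (hseg p q u))).
  { apply Hf; auto. apply hseg_sq; auto. intros t' Ht'. unfold hseg; simpl.
    replace (fst p + t' * (fst p + u * (fst q - fst p) - fst p)) with (fst p + (t' * u) * (fst q - fst p)) by ring.
    apply Hseg. split; nra. }
  replace (fst (f p) + t * (fst (f q) - fst (f p)), snd (f p)) with (f (hseg p q u)).
  apply Bf. apply Hseg. auto.
  rewrite (surjective_pairing (f (hseg p q u))). apply pt_eq; auto.
Qed.

Definition swp (p : pt) : pt := (snd p, fst p).
Definition swr (r : rect) : rect := mkRect (ry0 r) (ry1 r) (rx0 r) (rx1 r).

Lemma swp_swp : forall p, swp (swp p) = p.
Proof. intros [a b]; reflexivity. Qed.

Lemma swr_in : forall r p, in_rect (swr r) p <-> in_rect r (swp p).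
Proof. intros r p. unfold in_rect, swr, swp; simpl. tauto. Qed.
Lemma swr_int : forall r p, in_interior (swr r) p <-> in_interior r (swp p).
Proof. intros r p. unfold in_interior, swr, swp; simpl. tauto. Qed.
Lemma swp_sq : forall p, in_sq (swp p) <-> in_sq p.
Proof. intros p. unfold in_sq, swp; simpl. tauto. Qed.

Lemma swr_bd : forall T p, on_bd (map swr T) p <-> on_bd T (swp p).
Proof.
  intros T p. unfold on_bd. split.
  - intros [r' [Hr [H1 H2]]]. apply in_map_iff in Hr. destruct Hr as [r [E Hr]]. subst r'.
    exists r. rewrite swr_in in H1. rewrite swr_int in H2. auto.
  - intros [r [Hr [H1 H2]]]. exists (swr r). split. apply in_map; auto.
    rewrite swr_in, swr_int. auto.
Qed.

Definition conj_sw (f : pt -> pt) : pt -> pt := fun p => swp (f (swp p)).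

Lemma hprop_ext : forall F G T, (forall p, in_sq p -> F p = G p) -> hprop F T -> hprop G T.
Proof. intros F G T E H p q Sp Sq Ep Hs. rewrite <- E, <- (E q); auto. Qed.
Lemma vprop_ext : forall F G T, (forall p, in_sq p -> F p = G p) -> vprop F T -> vprop G T.
Proof. intros F G T E H p q Sp Sq Ep Hs. rewrite <- E, <- (E q); auto. Qed.

Lemma v_to_h : forall f T, vprop f T -> hprop (conj_sw f) (map swr T).
Proof.
  intros f T H p q Sp Sq E Hs. unfold conj_sw, swp at 1 3. simpl.
  apply H; try (apply swp_sq; auto); auto.
  intros t Ht. specialize (Hs t Ht). apply swr_bd in Hs. exact Hs.
Qed.
Lemma h_to_v : forall f T, hprop f T -> vprop (conj_sw f) (map swr T).
Proof.
  intros f T H p q Sp Sq E Hs. unfold conj_sw, swp at 1 3. simpl.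
  apply H; try (apply swp_sq; auto); auto.
  intros t Ht. specialize (Hs t Ht). apply swr_bd in Hs. exact Hs.
Qed.
Lemma h_of_v : forall f T, vprop (conj_sw f) (map swr T) -> hprop f T.
Proof.
  intros f T H p q Sp Sq E Hs.
  pose proof (H (swp p) (swp q)) as X. unfold conj_sw in X. rewrite !swp_swp in X.
  apply X; try (apply swp_sq; auto); auto.
  intros t Ht. apply swr_bd. unfold swp; simpl. apply Hs; auto.
Qed.
Lemma v_of_h : forall f T, hprop (conj_sw f) (map swr T) -> vprop f T.
Proof.
  intros f T H p q Sp Sq E Hs.
  pose proof (H (swp p) (swp q)) as X. unfold conj_sw in X. rewrite !swp_swp in X.
  apply X; try (apply swp_sq; auto); auto.
  intros t Ht. apply swr_bd. unfold swp; simpl. apply Hs; auto.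
Qed.

Lemma dist2_swp : forall a b, dist2 (swp a) (swp b) = dist2 a b.
Proof. intros. unfold dist2, swp; simpl. apply Rmax_comm. Qed.

Lemma conj_sw_cont : forall f, sqpres f -> cont_on_sq f -> cont_on_sq (conj_sw f).
Proof.
  intros f Sf Cf p Sp eps He. destruct (Cf (swp p) ltac:(apply swp_sq; auto) eps He) as [d [Hd H]].
  exists d. split; auto. intros q Sq Hpq. unfold conj_sw. rewrite dist2_swp. apply H.
  apply swp_sq; auto. rewrite dist2_swp; auto.
Qed.
Lemma conj_sw_sq : forall f, sqpres f -> sqpres (conj_sw f).
Proof. intros f Sf p Sp. unfold conj_sw. apply swp_sq. apply Sf. apply swp_sq. auto. Qed.
Lemma conj_sw_bd : forall f T1 T2, (forall p, on_bd T1 p -> on_bd T2 (f p)) ->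
  forall p, on_bd (map swr T1) p -> on_bd (map swr T2) (conj_sw f p).
Proof.
  intros f T1 T2 H p Hp. apply swr_bd. unfold conj_sw. rewrite swp_swp. apply H. apply swr_bd. auto.
Qed.

Lemma vcomp : forall T1 T2 f h, sqpres f -> cont_on_sq f -> (forall p, on_bd T1 p -> on_bd T2 (f p)) ->
  vprop f T1 -> vprop h T2 -> vprop (fun p => h (f p)) T1.
Proof.
  intros T1 T2 f h Sf Cf Bf Hf Hh. apply v_of_h.
  pose proof (hcomp (map swr T1) (map swr T2) (conj_sw f) (conj_sw h) (conj_sw_sq f Sf) (conj_sw_cont f Sf Cf)
    (conj_sw_bd f T1 T2 Bf) (v_to_h f T1 Hf) (v_to_h h T2 Hh)) as X.
  eapply hprop_ext; [|exact X]. intros p _. unfold conj_sw. rewrite swp_swp. auto.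
Qed.

Lemma cont_comp : forall f h, sqpres f -> cont_on_sq f -> cont_on_sq h -> cont_on_sq (fun p => h (f p)).
Proof.
  intros f h Sf Cf Ch p Sp eps He. destruct (Ch (f p) (Sf p Sp) eps He) as [d1 [Hd1 H1]].
  destruct (Cf p Sp d1 Hd1) as [d [Hd H]]. exists d. split; [auto|]. intros q Sq Hq. apply H1; auto.
Qed.

Lemma equiv_refl : forall T, equiv_tiling T T.
Proof.
  intros T. apply equiv_unfold. exists (fun p => p). split; [|split; [|split; [|split]]].
  - split. intros p H; auto. split. intros p Sp eps He. exists eps. split; auto.
    exists (fun p => p). split. intros p H; auto. split. intros p Sp eps He. exists eps. split; auto. split; auto.
  - unfold fixes_corners; auto.
  - intros r Hr. exists r. split; auto. intros q. split; eauto. intros [p [Hp E]]. subst; auto.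
  - intros p q _ _ E _. auto.
  - intros p q _ _ E _. auto.
Qed.

Lemma equiv_trans : forall n T1 T2 T3, tiling n T1 -> tiling n T2 ->
  equiv_tiling T1 T2 -> equiv_tiling T2 T3 -> equiv_tiling T1 T3.
Proof.
  intros n T1 T2 T3 H1 H2 E1 E2. apply equiv_unfold in E1. apply equiv_unfold in E2. apply equiv_unfold.
  destruct E1 as [f [Hf [Cf [Tf [Hhf Hvf]]]]]. destruct E2 as [h [Hh [Ch [Th [Hhh Hvh]]]]].
  destruct (homeo_parts f Hf) as [Sf [Kf If]].
  assert (Bf : forall p, on_bd T1 p -> on_bd T2 (f p)).
  { apply (bd_pres n n T1 T2 f H1 H2 Sf If Tf). exact (sqbd_pres n T1 f H1 Cf Hhf Hvf). }
  exists (fun p => h (f p)). split; [|split; [|split; [|split]]].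
  - destruct Hf as [_ [_ [g [Sg [Cg [Gf Fg]]]]]]. destruct Hh as [Sh [Kh [k [Sk [Ck [Kh' Hk]]]]]].
    split. intros p Sp. apply Sh. apply Sf. auto. split. apply cont_comp; auto.
    exists (fun q => g (k q)). split. intros p Sp. apply Sg, Sk. auto. split. apply cont_comp; auto.
    split. intros p Sp. rewrite Kh'. apply Gf; auto. apply Sf; auto.
    intros q Sq. rewrite Fg. apply Hk; auto. apply Sk; auto.
  - destruct Cf as [A1 [A2 [A3 A4]]]. destruct Ch as [B1 [B2 [B3 B4]]].
    unfold fixes_corners. rewrite A1, A2, A3, A4. auto.
  - intros r Hr. destruct (Tf r Hr) as [r' [Hr' E']]. destruct (Th r' Hr') as [r'' [Hr'' E'']].
    exists r''. split; auto. intros q. rewrite E''. split.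
    + intros [p' [Hp' Ep']]. apply E' in Hp'. destruct Hp' as [p [Hp Ep]]. exists p. subst. auto.
    + intros [p [Hp Ep]]. exists (f p). split; auto. apply E'. eauto.
  - apply (hcomp T1 T2); auto.
  - apply (vcomp T1 T2); auto.
Qed.
Lemma inj_surj : forall n (m : nat -> nat), (forall i, (i < n)%nat -> (m i < n)%nat) ->
  (forall i j, (i < n)%nat -> (j < n)%nat -> m i = m j -> i = j) ->
  forall k, (k < n)%nat -> exists i, (i < n)%nat /\ m i = k.
Proof.
  intros n m Hr Hi k Hk.
  assert (ND : NoDup (map m (seq 0 n))).
  { apply NoDup_map_NoDup_ForallPairs. intros x y Hx Hy E. apply in_seq in Hx. apply in_seq in Hy. apply Hi; lia.
    apply seq_NoDup. }
  assert (INC : incl (map m (seq 0 n)) (seq 0 n)).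
  { intros x Hx. apply in_map_iff in Hx. destruct Hx as [i [E Hi']]. subst. apply in_seq in Hi'. apply in_seq.
    specialize (Hr i ltac:(lia)). lia. }
  assert (LL : (length (seq 0 n) <= length (map m (seq 0 n)))%nat) by (rewrite length_map; lia).
  pose proof (NoDup_length_incl ND LL INC) as X.
  assert (In k (seq 0 n)) by (apply in_seq; lia).
  apply X in H. apply in_map_iff in H. destruct H as [i [E Hi']]. apply in_seq in Hi'. exists i. split; auto. lia.
Qed.

Lemma tmap_inv : forall n T1 T2 f g, tiling n T1 -> tiling n T2 -> sqpres f -> injsq f ->
  (forall p, in_sq p -> g (f p) = p) -> tmap f T1 T2 -> tmap g T2 T1.
Proof.
  intros n T1 T2 f g H1 H2 Sf If Gf Tf.
  set (d := mkRect 0 0 0 0).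
  assert (L1 : length T1 = n) by apply H1. assert (L2 : length T2 = n) by apply H2.
  assert (EX : forall i, exists j, (i < n)%nat -> (j < n)%nat /\
     forall q, in_rect (nth j T2 d) q <-> exists p, in_rect (nth i T1 d) p /\ f p = q).
  { intros i. destruct (lt_dec i n) as [Hi|Hi].
    - destruct (Tf (nth i T1 d)) as [r' [Hr' E]]. apply nth_In; lia.
      destruct (In_nth T2 r' d Hr') as [j [Hj Ej]]. exists j. intros _. split. lia. rewrite Ej. auto.
    - exists 0%nat. intro; lia. }
  set (m := fun i => proj1_sig (constructive_indefinite_description _ (EX i))).
  assert (Hm : forall i, (i < n)%nat -> (m i < n)%nat /\
     forall q, in_rect (nth (m i) T2 d) q <-> exists p, in_rect (nth i T1 d) p /\ f p = q).
  { intros i Hi. unfold m. destruct (constructive_indefinite_description _ (EX i)) as [j Hj]. simpl. auto. }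
  assert (Minj : forall i j, (i < n)%nat -> (j < n)%nat -> m i = m j -> i = j).
  { intros i j Hi Hj E. destruct (Nat.eq_dec i j) as [|Nij]; auto. exfalso.
    destruct (Hm i Hi) as [_ E1]. destruct (Hm j Hj) as [_ E2].
    apply (tmap_inj n n T1 T2 f d i j (nth (m i) T2 d) (nth (m j) T2 d) H1 H2 If); auto; try lia.
    rewrite E. auto. }
  intros r' Hr'. destruct (In_nth T2 r' d Hr') as [j [Hj Ej]].
  destruct (inj_surj n m (fun i Hi => proj1 (Hm i Hi)) Minj j ltac:(lia)) as [i [Hi Emi]].
  exists (nth i T1 d). split. apply nth_In; lia.
  destruct (Hm i Hi) as [_ E]. rewrite Emi, Ej in E.
  assert (G : good (nth i T1 d)) by (apply (til_good n T1); auto; apply nth_In; lia).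
  intros q. split.
  - intros Hq. exists (f q). split. apply E. eauto. apply Gf. eapply rect_in_sq; eauto.
  - intros [p [Hp Ep]]. apply E in Hp. destruct Hp as [p0 [Hp0 Ep0]]. subst p. rewrite Gf in Ep.
    subst; auto. eapply rect_in_sq; eauto.
Qed.

Lemma edge_onto : forall n T F c, tiling n T -> cont_on_sq F -> sqpres F -> (c = 0 \/ c = 1) ->
  F (0, c) = (0, c) -> F (1, c) = (1, c) -> hprop F T ->
  forall x, in_sq x -> snd x = c -> exists y, in_sq y /\ snd y = c /\ F y = x.
Proof.
  intros n T F c HT CF SF Hc E0 E1 HF x Sx Ex.
  assert (S0 : in_sq (0, c)) by (unfold in_sq; simpl; lra).
  assert (S1 : in_sq (1, c)) by (unfold in_sq; simpl; lra).
  destruct (cont_seg F (hseg (0,c) (1,c)) CF (fun u Hu => hseg_sq _ _ u S0 S1 Hu) (fun u v => hseg_dist _ _ u v S0 S1)) as [Ck _].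
  destruct (IVT_cI (fun u => fst (F (hseg (0,c) (1,c) u))) 0 1 (fst x)) as [u [Hu Hku]]. lra. exact Ck.
  simpl. rewrite hseg0, hseg1 by auto. rewrite E0, E1. simpl. rewrite Rmin_left, Rmax_right by lra. apply Sx.
  simpl in Hku. exists (hseg (0,c) (1,c) u). split. apply hseg_sq; auto. split. simpl. auto.
  assert (snd (F (0,c)) = snd (F (hseg (0, c) (1, c) u))).
  { apply HF; auto. apply hseg_sq; auto. intros t Ht. apply (bd_of n); auto.
    - unfold in_sq; simpl. split; [|lra]. split; nra.
    - left. unfold sqbd; simpl. lra. }
  rewrite E0 in H. simpl in H. rewrite (surjective_pairing x), (surjective_pairing (F _)). apply pt_eq; auto. congruence.
Qed.

Lemma swr_tiling : forall n T, tiling n T -> tiling n (map swr T).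
Proof.
  intros n T [L [G [C D]]]. split; [|split; [|split]].
  - rewrite length_map; auto.
  - intros r' Hr'. apply in_map_iff in Hr'. destruct Hr' as [r [E Hr]]. subst. specialize (G r Hr). unfold swr; simpl. tauto.
  - intros p Sp. destruct (C (swp p)) as [r [Hr Hin]]. apply swp_sq; auto. exists (swr r). split. apply in_map; auto.
    apply swr_in; auto.
  - intros i j d Hi Hj Hij p [X Y]. rewrite length_map in Hi, Hj.
    rewrite (@nth_indep _ (map swr T) i d (swr d)) in X by (rewrite length_map; auto).
    rewrite (@nth_indep _ (map swr T) j d (swr d)) in Y by (rewrite length_map; auto).
    rewrite map_nth in X, Y. apply swr_int in X. apply swr_int in Y. apply (D i j d Hi Hj Hij (swp p)). auto.
Qed.

Lemma sqbd_inv : forall n T1 f g, tiling n T1 -> homeo_sq f -> fixes_corners f -> hprop f T1 -> vprop f T1 ->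
  (forall p, in_sq p -> g (f p) = p) -> forall x, in_sq x -> sqbd x -> sqbd (g x).
Proof.
  intros n T1 f g H1 Hf Cf Hh Hv Gf x Sx Bx.
  destruct (homeo_parts f Hf) as [Sf [Kf If]].
  destruct Cf as [C00 [C10 [C01 C11]]].
  assert (HS : forall c, (c = 0 \/ c = 1) -> snd x = c -> sqbd (g x)).
  { intros c Hc E. assert (F0 : f (0,c) = (0,c)) by (destruct Hc; subst; auto).
    assert (F1 : f (1,c) = (1,c)) by (destruct Hc; subst; auto).
    destruct (edge_onto n T1 f c H1 Kf Sf Hc F0 F1 Hh x Sx E) as [y [Sy [Ey Fy]]].
    subst x. rewrite Gf by auto. unfold sqbd. destruct Hc; subst; auto. }
  assert (VS : forall c, (c = 0 \/ c = 1) -> fst x = c -> sqbd (g x)).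
  { intros c Hc E.
    assert (F0 : conj_sw f (0,c) = (0,c)) by (unfold conj_sw, swp; simpl; destruct Hc; subst; [rewrite C00|rewrite C10]; auto).
    assert (F1 : conj_sw f (1,c) = (1,c)) by (unfold conj_sw, swp; simpl; destruct Hc; subst; [rewrite C01|rewrite C11]; auto).
    destruct (edge_onto n (map swr T1) (conj_sw f) c (swr_tiling n T1 H1) (conj_sw_cont f Sf Kf) (conj_sw_sq f Sf) Hc F0 F1
      (v_to_h f T1 Hv) (swp x) ltac:(apply swp_sq; auto) E) as [y [Sy [Ey Fy]]].
    unfold conj_sw in Fy. assert (f (swp y) = x) by (rewrite <- (swp_swp x), <- Fy, swp_swp; auto).
    subst x. rewrite Gf by (apply swp_sq; auto). unfold sqbd, swp; simpl. destruct Hc; subst; auto. }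
  unfold sqbd in Bx. destruct Bx as [B|[B|[B|B]]].
  - apply (VS 0); auto. - apply (VS 1); auto. - apply (HS 0); auto. - apply (HS 1); auto.
Qed.
Lemma first_hit_ne : forall k a b w, a <= b -> cI k a b -> Rmin (k a) (k b) < w < Rmax (k a) (k b) ->
  exists u, a <= u <= b /\ k u = w /\ (forall s, a <= s < u -> k s <> w).
Proof.
  intros k a b w Hab Hc Hw. destruct (Rle_dec (k a) (k b)).
  - rewrite Rmin_left, Rmax_right in Hw by lra.
    destruct (first_hit k a b w Hab Hc) as [u [Hu [Hk Hs]]]; try lra.
    exists u. split; auto. split; auto. intros s Hs'. specialize (Hs s Hs'). lra.
  - rewrite Rmin_right, Rmax_left in Hw by lra.
    destruct (first_hit (fun t => - k t) a b (- w) Hab (cI_opp k a b Hc)) as [u [Hu [Hk Hs]]]; simpl; try lra.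
    exists u. split; auto. split. lra. intros s Hs'. specialize (Hs s Hs'). simpl in Hs. lra.
Qed.

Definition ys (T : list rect) : list R := flat_map (fun r => [ry0 r; ry1 r]) T.
Definition xs (T : list rect) : list R := flat_map (fun r => [rx0 r; rx1 r]) T.

Lemma bd_xy : forall T p, on_bd T p -> ~ In (snd p) (ys T) -> In (fst p) (xs T).
Proof.
  intros T p [r [Hr [H1 H2]]] Hy. unfold ys, xs in *. apply in_flat_map. exists r. split; auto.
  assert (snd p <> ry0 r /\ snd p <> ry1 r).
  { split; intro E; apply Hy; apply in_flat_map; exists r; split; auto; simpl; auto. }
  unfold in_rect, in_interior in *. simpl.
  destruct (Req_dec (fst p) (rx0 r)); auto. destruct (Req_dec (fst p) (rx1 r)); auto.
  exfalso. apply H2. lra.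
Qed.

Lemma hinv : forall n T1 T2 f g, tiling n T1 -> sqpres g -> cont_on_sq g -> (forall x, in_sq x -> f (g x) = x) ->
  (forall p, on_bd T2 p -> on_bd T1 (g p)) -> vprop f T1 -> hprop g T2.
Proof.
  intros n T1 T2 f g H1 Sg Cg Fg Bg Vf p q Sp Sq E Hs.
  destruct (Req_dec (fst p) (fst q)) as [Ex|Nx].
  { rewrite (surjective_pairing p), (surjective_pairing q), Ex, E. auto. }
  destruct (cont_seg g (hseg p q) Cg (fun u Hu => hseg_sq p q u Sp Sq Hu) (fun u v => hseg_dist p q u v Sp Sq)) as [C1 C2].
  set (k1 := fun u => fst (g (hseg p q u))) in *. set (k2 := fun u => snd (g (hseg p q u))) in *.
  assert (K20 : k2 0 = snd (g p)) by (unfold k2; rewrite hseg0; auto).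
  assert (K21 : k2 1 = snd (g q)) by (unfold k2; rewrite hseg1; auto).
  rewrite <- K20, <- K21.
  destruct (Req_dec (k2 0) (k2 1)) as [X|X]; auto. exfalso.
  assert (Hmm : Rmin (k2 0) (k2 1) < Rmax (k2 0) (k2 1)).
  { destruct (Rle_dec (k2 0) (k2 1)). rewrite Rmin_left, Rmax_right; lra. rewrite Rmin_right, Rmax_left; lra. }
  destruct (avoid (ys T1) _ _ Hmm) as [w [Hw Hwn]].
  destruct (first_hit_ne k2 0 1 w ltac:(lra) C2 Hw) as [u [Hu [Hku Hfirst]]].
  assert (U0 : 0 < u).
  { destruct (Req_dec u 0); [|lra]. subst u. exfalso.
    destruct (Rle_dec (k2 0) (k2 1)). rewrite Rmin_left in Hw; lra. rewrite Rmax_left in Hw; lra. }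
  destruct (away (ys T1) w Hwn) as [e [He Haw]].
  destruct (C2 u Hu e He) as [d1 [Hd1 Hc1]].
  assert (BD : forall s, 0 <= s <= 1 -> on_bd T1 (g (hseg p q s))) by (intros s Hs'; apply Bg; apply Hs; auto).
  assert (XS : forall s, 0 <= s <= 1 -> Rabs (u - s) < d1 -> In (k1 s) (xs T1)).
  { intros s Hs' Hus. apply bd_xy. apply BD; auto. apply Haw.
    specialize (Hc1 s Hs' Hus). fold (k2 s). rewrite <- Hku. rewrite Rabs_minus_sym. auto. }
  set (s0 := Rmax 0 (u - d1/2)).
  assert (S0 : 0 <= s0 < u /\ u - d1/2 <= s0).
  { unfold s0. split. split. apply Rmax_l. apply Rmax_lub_lt; lra. apply Rmax_r. }
  assert (CONST : forall s, s0 <= s <= u -> k1 s = k1 u).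
  { intros s Hs'. apply (finite_const k1 s u (xs T1)). lra. apply (cI_sub k1 0 1); auto; lra.
    intros t Ht. apply XS. lra. rewrite Rabs_right; lra. }
  assert (G0 : in_sq (g (hseg p q u))) by (apply Sg; apply hseg_sq; auto).
  assert (G1 : in_sq (g (hseg p q s0))) by (apply Sg; apply hseg_sq; auto; lra).
  assert (VF : fst (f (g (hseg p q u))) = fst (f (g (hseg p q s0)))).
  { apply Vf; auto. fold (k1 u) (k1 s0). symmetry. apply CONST. lra.
    intros t Ht. fold (k1 u) (k2 u) (k2 s0).
    destruct (IVT_cI k2 s0 u (k2 u + t * (k2 s0 - k2 u))) as [s' [Hs' Hks']]. lra.
    apply (cI_sub k2 0 1); auto; lra.
    rewrite Rmin_comm, Rmax_comm. apply conv_between; auto.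
    replace (k1 u, k2 u + t * (k2 s0 - k2 u)) with (g (hseg p q s')).
    apply BD. lra. rewrite (surjective_pairing (g _)). apply pt_eq. fold (k1 s'). apply CONST; lra. auto. }
  rewrite !Fg in VF by (apply hseg_sq; auto; lra). unfold hseg in VF. simpl in VF.
  assert ((u - s0) * (fst q - fst p) = 0) by lra.
  apply Rmult_integral in H. destruct H; lra.
Qed.

Lemma equiv_sym : forall n T1 T2, tiling n T1 -> tiling n T2 -> equiv_tiling T1 T2 -> equiv_tiling T2 T1.
Proof.
  intros n T1 T2 H1 H2 E. apply equiv_unfold in E. apply equiv_unfold.
  destruct E as [f [Hf [Cf [Tf [Hhf Hvf]]]]].
  destruct (homeo_parts f Hf) as [Sf [Kf If]].
  pose proof Hf as Hf'. destruct Hf' as [_ [_ [g [Sg [Cg [Gf Fg]]]]]].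
  assert (Ig : injsq g). { intros a b Sa Sb E. rewrite <- (Fg a Sa), <- (Fg b Sb), E. auto. }
  assert (Tg : tmap g T2 T1) by (apply (tmap_inv n T1 T2 f g); auto).
  assert (Bg : forall p, on_bd T2 p -> on_bd T1 (g p)).
  { apply (bd_pres n n T2 T1 g H2 H1 Sg Ig Tg). apply (sqbd_inv n T1 f g); auto. }
  exists g. split; [|split; [|split; [|split]]].
  - split; auto. split; auto. exists f. auto.
  - destruct Cf as [A1 [A2 [A3 A4]]]. unfold fixes_corners.
    rewrite <- A1 at 1. rewrite <- A2 at 1. rewrite <- A3 at 1. rewrite <- A4 at 1.
    rewrite !Gf; auto; unfold in_sq; simpl; lra.
  - auto.
  - apply (hinv n T1 T2 f g); auto.
  - apply v_of_h. apply (hinv n (map swr T1) (map swr T2) (conj_sw f) (conj_sw g)).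
    apply swr_tiling; auto. apply conj_sw_sq; auto. apply conj_sw_cont; auto.
    intros x Sx. unfold conj_sw. rewrite swp_swp, Fg, swp_swp; auto. apply swp_sq; auto.
    apply conj_sw_bd; auto. apply h_to_v; auto.
Qed.
Definition fl (fx fy : bool) (p : pt) : pt :=
  (if fx then 1 - fst p else fst p, if fy then 1 - snd p else snd p).
Definition flr (fx fy : bool) (r : rect) : rect := act_rect (false, fx, fy) r.

Lemma fl_fl : forall fx fy p, fl fx fy (fl fx fy p) = p.
Proof. intros [] [] [a b]; unfold fl; simpl; apply pt_eq; ring. Qed.

Lemma flr_in : forall fx fy r p, in_rect (flr fx fy r) p <-> in_rect r (fl fx fy p).
Proof. intros [] [] r p; unfold flr, fl, in_rect; simpl; split; intros; lra. Qed.
Lemma flr_int : forall fx fy r p, in_interior (flr fx fy r) p <-> in_interior r (fl fx fy p).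
Proof. intros [] [] r p; unfold flr, fl, in_interior; simpl; split; intros; lra. Qed.
Lemma fl_sq : forall fx fy p, in_sq (fl fx fy p) <-> in_sq p.
Proof. intros [] [] p; unfold fl, in_sq; simpl; split; intros; lra. Qed.

Lemma flr_bd : forall fx fy T p, on_bd (map (flr fx fy) T) p <-> on_bd T (fl fx fy p).
Proof.
  intros fx fy T p. unfold on_bd. split.
  - intros [r' [Hr [H1 H2]]]. apply in_map_iff in Hr. destruct Hr as [r [E Hr]]. subst r'.
    exists r. rewrite flr_in in H1. rewrite flr_int in H2. auto.
  - intros [r [Hr [H1 H2]]]. exists (flr fx fy r). split. apply in_map; auto.
    rewrite flr_in, flr_int. auto.
Qed.

Lemma flr_tiling : forall fx fy n T, tiling n T -> tiling n (map (flr fx fy) T).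
Proof.
  intros fx fy n T [L [G [C D]]]. split; [|split; [|split]].
  - rewrite length_map; auto.
  - intros r' Hr'. apply in_map_iff in Hr'. destruct Hr' as [r [E Hr]]. subst. specialize (G r Hr).
    destruct fx, fy; unfold flr; simpl; lra.
  - intros p Sp. destruct (C (fl fx fy p)) as [r [Hr Hin]]. apply fl_sq; auto. exists (flr fx fy r). split. apply in_map; auto.
    apply flr_in; auto.
  - intros i j d Hi Hj Hij p [X Y]. rewrite length_map in Hi, Hj.
    rewrite (@nth_indep _ (map (flr fx fy) T) i d (flr fx fy d)) in X by (rewrite length_map; auto).
    rewrite (@nth_indep _ (map (flr fx fy) T) j d (flr fx fy d)) in Y by (rewrite length_map; auto).
    rewrite map_nth in X, Y. apply flr_int in X. apply flr_int in Y. apply (D i j d Hi Hj Hij (fl fx fy p)). auto.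
Qed.

Lemma dist2_fl : forall fx fy a b, dist2 (fl fx fy a) (fl fx fy b) = dist2 a b.
Proof.
  intros [] [] a b; unfold dist2, fl; simpl; try reflexivity;
  repeat match goal with |- context [1 - ?x - (1 - ?y)] => replace (1 - x - (1 - y)) with (- (x - y)) by ring; rewrite Rabs_Ropp end;
  reflexivity.
Qed.

Definition conj_fl fx fy (f : pt -> pt) : pt -> pt := fun p => fl fx fy (f (fl fx fy p)).

Definition is_corner (c : pt) := c = (0,0) \/ c = (1,0) \/ c = (0,1) \/ c = (1,1).
Lemma fix_corner : forall f c, fixes_corners f -> is_corner c -> f c = c.
Proof. intros f c [A [B [C D]]] [E|[E|[E|E]]]; subst; auto. Qed.
Lemma fl_corner : forall fx fy c, is_corner c -> is_corner (fl fx fy c).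
Proof.
  intros [] [] c [E|[E|[E|E]]]; subst; unfold fl, is_corner; simpl;
  first [left; apply pt_eq; ring| right; left; apply pt_eq; ring | right; right; left; apply pt_eq; ring | right; right; right; apply pt_eq; ring].
Qed.
Lemma corners_fix : forall f, (forall c, is_corner c -> f c = c) -> fixes_corners f.
Proof. intros f H. unfold fixes_corners. repeat split; apply H; unfold is_corner; auto 6. Qed.

Lemma fl_hseg : forall fx fy p q t, fl fx fy (hseg p q t) = hseg (fl fx fy p) (fl fx fy q) t.
Proof. intros [] [] p q t; unfold fl, hseg; simpl; apply pt_eq; ring. Qed.
Lemma fl_vseg : forall fx fy p q t, fl fx fy (vseg p q t) = vseg (fl fx fy p) (fl fx fy q) t.
Proof. intros [] [] p q t; unfold fl, vseg; simpl; apply pt_eq; ring. Qed.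

Lemma fl_snd : forall fx fy p q, snd p = snd q -> snd (fl fx fy p) = snd (fl fx fy q).
Proof. intros [] [] p q E; unfold fl; simpl; rewrite E; auto. Qed.
Lemma fl_snd' : forall fx fy p q, snd (fl fx fy p) = snd (fl fx fy q) -> snd p = snd q.
Proof. intros [] [] p q E; unfold fl in E; simpl in E; lra. Qed.
Lemma fl_fst : forall fx fy p q, fst p = fst q -> fst (fl fx fy p) = fst (fl fx fy q).
Proof. intros [] [] p q E; unfold fl; simpl; rewrite E; auto. Qed.
Lemma fl_fst' : forall fx fy p q, fst (fl fx fy p) = fst (fl fx fy q) -> fst p = fst q.
Proof. intros [] [] p q E; unfold fl in E; simpl in E; lra. Qed.

Lemma equiv_fl : forall fx fy T T', equiv_tiling T T' -> equiv_tiling (map (flr fx fy) T) (map (flr fx fy) T').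
Proof.
  intros fx fy T T' E. apply equiv_unfold in E. apply equiv_unfold.
  destruct E as [f [Hf [Cf [Tf [Hh Hv]]]]].
  destruct Hf as [Sf [Kf [g [Sg [Kg [Gf Fg]]]]]].
  exists (conj_fl fx fy f). split; [|split; [|split; [|split]]].
  - assert (CC : forall h, sqpres h -> cont_on_sq h -> cont_on_sq (conj_fl fx fy h)).
    { intros h Sh Ch p Sp eps He. destruct (Ch (fl fx fy p) ltac:(apply fl_sq; auto) eps He) as [d [Hd H]].
      exists d. split; auto. intros q Sq Hpq. unfold conj_fl. rewrite dist2_fl. apply H.
      apply fl_sq; auto. rewrite dist2_fl; auto. }
    assert (SS : forall h, sqpres h -> sqpres (conj_fl fx fy h)).
    { intros h Sh p Sp. unfold conj_fl. apply fl_sq. apply Sh. apply fl_sq. auto. }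
    split. apply SS; auto. split. apply CC; auto.
    exists (conj_fl fx fy g). split. apply SS; auto. split. apply CC; auto.
    split; intros p Sp; unfold conj_fl; rewrite fl_fl; [rewrite Gf|rewrite Fg]; try apply fl_fl; apply fl_sq; auto.
  - apply corners_fix. intros c Hc. unfold conj_fl. rewrite (fix_corner f); auto. apply fl_fl. apply fl_corner; auto.
  - intros r' Hr'. apply in_map_iff in Hr'. destruct Hr' as [r [E Hr]]. subst r'.
    destruct (Tf r Hr) as [s [Hs Es]]. exists (flr fx fy s). split. apply in_map; auto.
    intros q. rewrite flr_in, Es. split.
    + intros [p [Hp Ep]]. exists (fl fx fy p). split. apply flr_in. rewrite fl_fl; auto.
      unfold conj_fl. rewrite fl_fl, Ep, fl_fl. auto.
    + intros [p [Hp Ep]]. exists (fl fx fy p). split. apply flr_in; auto. rewrite <- Ep. unfold conj_fl. rewrite fl_fl. auto.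
  - intros p q Sp Sq E Hs. unfold conj_fl. apply fl_snd. apply Hh.
    apply fl_sq; auto. apply fl_sq; auto. apply fl_snd; auto.
    intros t Ht. specialize (Hs t Ht). apply flr_bd in Hs. change (fst p + t * (fst q - fst p), snd p) with (hseg p q t) in Hs.
    rewrite fl_hseg in Hs. exact Hs.
  - intros p q Sp Sq E Hs. unfold conj_fl. apply fl_fst. apply Hv.
    apply fl_sq; auto. apply fl_sq; auto. apply fl_fst; auto.
    intros t Ht. specialize (Hs t Ht). apply flr_bd in Hs. change (fst p, snd p + t * (snd q - snd p)) with (vseg p q t) in Hs.
    rewrite fl_vseg in Hs. exact Hs.
Qed.

Lemma equiv_sw : forall T T', equiv_tiling T T' -> equiv_tiling (map swr T) (map swr T').
Proof.
  intros T T' E. apply equiv_unfold in E. apply equiv_unfold.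
  destruct E as [f [Hf [Cf [Tf [Hh Hv]]]]].
  destruct Hf as [Sf [Kf [g [Sg [Kg [Gf Fg]]]]]].
  exists (conj_sw f). split; [|split; [|split; [|split]]].
  - split. apply conj_sw_sq; auto. split. apply conj_sw_cont; auto.
    exists (conj_sw g). split. apply conj_sw_sq; auto. split. apply conj_sw_cont; auto.
    split; intros p Sp; unfold conj_sw; rewrite swp_swp; [rewrite Gf|rewrite Fg]; try apply swp_swp; apply swp_sq; auto.
  - destruct Cf as [A [B [C D]]]. unfold fixes_corners, conj_sw, swp; simpl. rewrite A, B, C, D. auto.
  - intros r' Hr'. apply in_map_iff in Hr'. destruct Hr' as [r [E Hr]]. subst r'.
    destruct (Tf r Hr) as [s [Hs Es]]. exists (swr s). split. apply in_map; auto.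
    intros q. rewrite swr_in, Es. split.
    + intros [p [Hp Ep]]. exists (swp p). split. apply swr_in. rewrite swp_swp; auto.
      unfold conj_sw. rewrite swp_swp, Ep, swp_swp. auto.
    + intros [p [Hp Ep]]. exists (swp p). split. apply swr_in; auto. rewrite <- Ep. unfold conj_sw. rewrite swp_swp. auto.
  - apply v_to_h; auto.
  - apply h_to_v; auto.
Qed.

Lemma act_split : forall sw fx fy T, act_tiling (sw, fx, fy) T =
  if sw then map swr (map (flr fx fy) T) else map (flr fx fy) T.
Proof.
  intros [] fx fy T; unfold act_tiling; [rewrite map_map|]; apply map_ext; intros r; destruct fx, fy; reflexivity.
Qed.

Lemma equiv_act : forall g T T', equiv_tiling T T' -> equiv_tiling (act_tiling g T) (act_tiling g T').
Proof.
  intros [[sw fx] fy] T T' E. rewrite !act_split. destruct sw.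
  - apply equiv_sw, equiv_fl; auto.
  - apply equiv_fl; auto.
Qed.

Lemma act_tiling_ok : forall g n T, tiling n T -> tiling n (act_tiling g T).
Proof.
  intros [[sw fx] fy] n T H. rewrite act_split. destruct sw.
  - apply swr_tiling, flr_tiling; auto.
  - apply flr_tiling; auto.
Qed.
Lemma mod2_even : forall n, Nat.modulo n 2 = if Nat.even n then 0%nat else 1%nat.
Proof.
  assert (H : forall n, Nat.modulo n 2 = (if Nat.even n then 0%nat else 1%nat) /\ Nat.modulo (S n) 2 = (if Nat.even (S n) then 0%nat else 1%nat)).
  { induction n as [|n [IH1 IH2]]. simpl. auto. split; auto.
    change (Nat.even (S (S n))) with (Nat.even n). rewrite <- IH1.
    replace (S (S n)) with (n + 1 * 2)%nat by lia. apply Nat.Div0.mod_add. }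
  apply H.
Qed.

Section Count.
End Count.

Fixpoint pw (E : list rect -> list rect -> Prop) (L : list (list rect)) : Prop :=
  match L with
  | [] => True
  | x :: l => (forall y, In y l -> ~ E x y /\ ~ E y x) /\ pw E l
  end.

Lemma pw_nth : forall E L, pw E L -> forall i j d, (i < length L)%nat -> (j < length L)%nat -> i <> j ->
  ~ E (nth i L d) (nth j L d).
Proof.
  intros E. induction L as [|x l IH]; intros H i j d Hi Hj Hij; simpl in *. lia.
  destruct H as [H1 H2]. destruct i, j.
  - lia.
  - apply H1. apply nth_In. lia.
  - apply H1. apply nth_In. lia.
  - apply IH; auto; lia.
Qed.

Lemma pw_remove : forall E r1 x r2, pw E (r1 ++ x :: r2) ->
  pw E (r1 ++ r2) /\ forall y, In y (r1 ++ r2) -> ~ E y x /\ ~ E x y.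
Proof.
  intros E. induction r1 as [|a r1 IH]; intros x r2 H; simpl in *.
  - destruct H as [H1 H2]. split; auto. intros y Hy. destruct (H1 y Hy). auto.
  - destruct H as [H1 H2]. destruct (IH x r2 H2) as [IH1 IH2]. split.
    + split; auto. intros y Hy. apply H1. apply in_app_iff in Hy. apply in_app_iff. simpl. tauto.
    + intros y [E'|Hy].
      * subst y. destruct (H1 x) as [A B]. apply in_app_iff; simpl; auto. auto.
      * apply IH2; auto.
Qed.

Definition repl (E : list rect -> list rect -> Prop) (Q : list rect -> Prop) (L : list (list rect)) :=
  (forall T, In T L -> Q T) /\ pw E L /\ (forall T, Q T -> exists T', In T' L /\ E T T').

Lemma exist_rep : forall n (Q : list rect -> Prop) Cand, (forall T, Q T -> tiling n T) ->
  (forall T, Q T -> exists c, In c Cand /\ tiling n c /\ equiv_tiling T c) ->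
  exists L, repl equiv_tiling Q L.
Proof.
  intros n Q Cand. revert Q. induction Cand as [|c rest IH]; intros Q HQ Hcov.
  - exists []. split. intros T []. split. simpl; auto. intros T HT. destruct (Hcov T HT) as [c [[] _]].
  - destruct (classic (exists T0, Q T0 /\ equiv_tiling T0 c)) as [[T0 [Q0 E0]]|N].
    + destruct (IH (fun T => Q T /\ ~ equiv_tiling T T0)) as [L [L1 [L2 L3]]].
      * intros T [HT _]; auto.
      * intros T [HT NT]. destruct (Hcov T HT) as [c' [[E|Hc'] [Tc' Ec']]].
        -- subst c'. exfalso. apply NT. apply (equiv_trans n T c T0); auto.
           apply (equiv_sym n T0 c); auto.
        -- exists c'. auto.
      * exists (T0 :: L). split; [|split].
        -- intros T [E|HT]. subst; auto. apply L1; auto.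
        -- split; auto. intros y Hy. destruct (L1 y Hy) as [Qy Ny]. split; auto.
           intro X. apply Ny. apply (equiv_sym n T0 y); auto.
        -- intros T HT. destruct (classic (equiv_tiling T T0)). exists T0. simpl; auto.
           destruct (L3 T (conj HT H)) as [T' [HT' ET']]. exists T'. simpl; auto.
    + apply IH; auto. intros T HT. destruct (Hcov T HT) as [c' [[E|Hc'] [Tc' Ec']]].
      * subst c'. exfalso. apply N. eauto.
      * eauto.
Qed.

Definition Fix (s : list rect -> list rect) T := equiv_tiling (s T) T.

Lemma parity : forall n (s : list rect -> list rect),
  (forall T, s (s T) = T) -> (forall T, tiling n T -> tiling n (s T)) ->
  (forall T T', equiv_tiling T T' -> equiv_tiling (s T) (s T')) ->
  forall k (A : list rect -> Prop) L, (length L <= k)%nat ->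
  (forall T, A T -> tiling n T) ->
  (forall T T', A T -> tiling n T' -> equiv_tiling T T' -> A T') ->
  (forall T, A T -> A (s T)) ->
  repl equiv_tiling A L ->
  exists L', repl equiv_tiling (fun T => A T /\ Fix s T) L' /\ Nat.even (length L') = Nat.even (length L).
Proof.
  intros n s Hss Hst Hse. induction k as [|k IH]; intros A L Hk HA Hinv Hcl [R1 [R2 R3]].
  { destruct L; simpl in Hk; [|lia]. exists []. split; auto. split. intros T []. split. simpl; auto.
    intros T [HT _]. destruct (R3 T HT) as [T' [[] _]]. }
  destruct L as [|l rest].
  { exists []. split; auto. split. intros T []. split. simpl; auto.
    intros T [HT _]. destruct (R3 T HT) as [T' [[] _]]. }
  assert (Tl : tiling n l) by (apply HA; apply R1; simpl; auto).
  assert (TR : forall T, In T rest -> tiling n T) by (intros; apply HA; apply R1; simpl; auto).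
  destruct R2 as [P1 P2].
  assert (sym : forall T T', tiling n T -> tiling n T' -> equiv_tiling T T' -> equiv_tiling T' T)
    by (intros; apply (equiv_sym n); auto).
  assert (trans : forall T1 T2 T3, tiling n T1 -> tiling n T2 -> equiv_tiling T1 T2 -> equiv_tiling T2 T3 -> equiv_tiling T1 T3)
    by (intros; apply (equiv_trans n T1 T2 T3); auto).
  assert (FixE : forall T T', tiling n T -> tiling n T' -> Fix s T -> equiv_tiling T T' -> Fix s T').
  { intros T T' HT HT' F E. unfold Fix in *. apply (trans (s T') (s T) T'). apply Hst; auto. apply Hst; auto.
    apply sym. apply Hst; auto. apply Hst; auto. apply Hse; auto. apply (trans (s T) T T'); auto. }
  assert (FixS : forall T, tiling n T -> Fix s (s T) -> Fix s T).
  { intros T HT F. unfold Fix in *. rewrite Hss in F. apply sym; auto. }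
  assert (CLP : forall x y, tiling n x -> tiling n y -> equiv_tiling (s x) y ->
     forall T, tiling n T -> ~ equiv_tiling T x -> ~ equiv_tiling T y -> ~ equiv_tiling (s T) x /\ ~ equiv_tiling (s T) y).
  { intros x y Tx Ty Exy T HT N1 N2.
    assert (Eyx : equiv_tiling x (s y)) by (rewrite <- (Hss x); apply Hse; auto).
    split; intro X.
    - apply N2. assert (equiv_tiling T (s x)) by (rewrite <- (Hss T); apply Hse; auto).
      apply (trans T (s x) y); auto.
    - apply N1. assert (equiv_tiling T (s y)) by (rewrite <- (Hss T); apply Hse; auto).
      apply (trans T (s y) x); auto; apply sym; auto. }
  destruct (classic (Fix s l)) as [Fl|Fl].
  - set (A1 := fun T => A T /\ ~ equiv_tiling T l).
    destruct (IH A1 rest) as [L1 [[Q1 [Q2 Q3]] Hpar]].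
    + simpl in Hk. lia.
    + intros T [HT _]; auto.
    + intros T T' [HT NT] HT' E. split. apply (Hinv T); auto. intro X. apply NT. apply (trans _ T'); auto.
    + intros T [HT NT]. split; [auto|]. destruct (CLP l l Tl Tl Fl T (HA T HT) NT NT) as [X _]. exact X.
    + split; [|split].
      * intros T HT. split. apply R1; simpl; auto. intro X. destruct (P1 T HT). apply H0. apply sym; auto.
      * auto.
      * intros T [HT NT]. destruct (R3 T HT) as [T' [[E|HT'] ET']]. subst; tauto. eauto.
    + exists (l :: L1). split.
      * split; [|split].
        -- intros T [E|HT]. subst. split; auto. apply R1; simpl; auto.
           destruct (Q1 T HT) as [[X _] Y]. auto.
        -- split; auto. intros y Hy. destruct (Q1 y Hy) as [[Ay Ny] _].
           split; [intro X; apply Ny; apply sym; auto | exact Ny].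
        -- intros T [HT FT]. destruct (classic (equiv_tiling T l)). exists l. simpl; auto.
           destruct (Q3 T) as [T' [HT' ET']]. split; auto. split; auto. exists T'. simpl; auto.
      * simpl length. rewrite !Nat.even_succ. unfold Nat.odd. rewrite Hpar. reflexivity.
  - destruct (R3 (s l)) as [l' [Hl' El']]. apply Hcl. apply R1; simpl; auto.
    destruct Hl' as [E|Hl']. { subst l'. exfalso. apply Fl. exact El'. }
    assert (Tl' : tiling n l') by auto.
    destruct (in_split l' rest Hl') as [r1 [r2 Er]]. rewrite Er in P1, P2, TR, R1, R3, Hk.
    destruct (pw_remove equiv_tiling r1 l' r2 P2) as [PW PX].
    set (A2 := fun T => A T /\ ~ equiv_tiling T l /\ ~ equiv_tiling T l').
    destruct (IH A2 (r1 ++ r2)) as [L2 [[Q1 [Q2 Q3]] Hpar]].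
    + simpl in Hk. rewrite length_app in *. simpl in Hk. lia.
    + intros T [HT _]; auto.
    + intros T T' [HT [N1 N2]] HT' E. split. apply (Hinv T); auto.
      split; intro X; [apply N1|apply N2]; apply (trans _ T'); auto.
    + intros T [HT [N1 N2]]. split; [auto|]. exact (CLP l l' Tl Tl' El' T (HA T HT) N1 N2).
    + split; [|split]; auto.
      * intros T HT. split. apply R1; simpl; right; apply in_app_iff; apply in_app_iff in HT; simpl; tauto.
        split. intro X. destruct (P1 T) as [X1 X2]. apply in_app_iff; apply in_app_iff in HT; simpl; tauto. exact (X2 X).
        destruct (PX T HT); auto.
      * intros T [HT [N1 N2]]. destruct (R3 T HT) as [T' [[E|HT'] ET']]. subst; tauto.
        apply in_app_iff in HT'. destruct HT' as [X|[X|X]].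
        -- exists T'. split; auto. apply in_app_iff; auto.
        -- subst; tauto.
        -- exists T'. split; auto. apply in_app_iff; auto.
    + exists L2. split.
      * split; [|split]; auto.
        -- intros T HT. destruct (Q1 T HT) as [[X _] Y]. auto.
        -- intros T [HT FT]. assert (TT : tiling n T) by auto. apply Q3. split; [|exact FT]. split; [exact HT|]. split.
           ++ intro X. apply Fl. exact (FixE T l TT Tl FT X).
           ++ intro X. apply Fl. assert (F' : Fix s l') by exact (FixE T l' TT Tl' FT X).
              apply FixS; auto. apply (FixE l' (s l)); auto.
      * rewrite Hpar, Er. rewrite length_app. simpl. rewrite length_app. simpl.
        replace (length r1 + S (length r2))%nat with (S (length r1 + length r2))%nat by lia. reflexivity.
Qed.
Definition sa := act_tiling (false, true, false).
Definition sb := act_tiling (false, false, true).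
Definition sc := act_tiling (true, false, false).

Lemma rect_eq : forall a b c d a' b' c' d', a = a' -> b = b' -> c = c' -> d = d' -> mkRect a b c d = mkRect a' b' c' d'.
Proof. intros; subst; auto. Qed.

Lemma sa_sa : forall T, sa (sa T) = T.
Proof. intros T. unfold sa, act_tiling. rewrite map_map. rewrite <- (map_id T) at 2. apply map_ext.
  intros [a b c d]. unfold act_rect; simpl. apply rect_eq; ring. Qed.
Lemma sb_sb : forall T, sb (sb T) = T.
Proof. intros T. unfold sb, act_tiling. rewrite map_map. rewrite <- (map_id T) at 2. apply map_ext.
  intros [a b c d]. unfold act_rect; simpl. apply rect_eq; ring. Qed.
Lemma sc_sc : forall T, sc (sc T) = T.
Proof. intros T. unfold sc, act_tiling. rewrite map_map. rewrite <- (map_id T) at 2. apply map_ext.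
  intros [a b c d]. reflexivity. Qed.
Lemma sa_sb : forall T, sa (sb T) = sb (sa T).
Proof. intros T. unfold sa, sb, act_tiling. rewrite !map_map. apply map_ext. intros [a b c d]. reflexivity. Qed.
Lemma sa_sc : forall T, sa (sc T) = sc (sb T).
Proof. intros T. unfold sa, sb, sc, act_tiling. rewrite !map_map. apply map_ext. intros [a b c d]. reflexivity. Qed.
Lemma sb_sc : forall T, sb (sc T) = sc (sa T).
Proof. intros T. unfold sa, sb, sc, act_tiling. rewrite !map_map. apply map_ext. intros [a b c d]. reflexivity. Qed.

Lemma act_decomp : forall sw fx fy T, act_tiling (sw, fx, fy) T =
  (if sw then sc else fun x => x) ((if fy then sb else fun x => x) ((if fx then sa else fun x => x) T)).
Proof.
  intros sw fx fy T. destruct sw, fx, fy; unfold sa, sb, sc, act_tiling;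
  induction T as [|[a b c d] T IH]; simpl; auto; f_equal; auto.
Qed.

Lemma FixE' : forall n s, (forall T, tiling n T -> tiling n (s T)) ->
  (forall T T', equiv_tiling T T' -> equiv_tiling (s T) (s T')) ->
  forall T T', tiling n T -> tiling n T' -> Fix s T -> equiv_tiling T T' -> Fix s T'.
Proof.
  intros n s Hst Hse T T' HT HT' F E. unfold Fix in *.
  apply (equiv_trans n (s T') (s T) T'). apply Hst; auto. apply Hst; auto.
  apply (equiv_sym n (s T) (s T')). apply Hst; auto. apply Hst; auto. apply Hse; auto.
  apply (equiv_trans n (s T) T T'); auto.
Qed.

Lemma repl_ext : forall E Q Q' L, (forall T, Q T <-> Q' T) -> repl E Q L -> repl E Q' L.
Proof.
  intros E Q Q' L H [A [B C]]. split; [|split]; auto. intros T HT. apply H; auto.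
  intros T HT. apply C. apply H. auto.
Qed.

Lemma repl_num : forall n P L, repl equiv_tiling (fun T => tiling n T /\ P T) L -> num_classes P n (length L).
Proof.
  intros n P L [A [B C]]. exists L. split; auto. split; auto. split.
  - intros i j d Hi Hj Hij. apply pw_nth; auto.
  - intros T HT HP. apply C. auto.
Qed.

Lemma fix_step : forall n s T X, (forall T, tiling n T -> tiling n (s T)) ->
  (forall T T', equiv_tiling T T' -> equiv_tiling (s T) (s T')) ->
  tiling n T -> tiling n X -> Fix s T -> equiv_tiling X T -> equiv_tiling (s X) T.
Proof.
  intros n s T X Hst Hse HT HX F E. unfold Fix in F.
  apply (equiv_trans n (s X) (s T) T); auto; apply Hst; auto.
Qed.

Lemma main_from_cov : forall n Cand,
  (forall T, tiling n T -> exists c, In c Cand /\ tiling n c /\ equiv_tiling T c) ->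
  exists t s : nat, is_t n t /\ is_s n s /\ Nat.modulo s 2 = Nat.modulo t 2.
Proof.
  intros n Cand Hcov.
  assert (Ta : forall T, tiling n T -> tiling n (sa T)) by (intros; apply act_tiling_ok; auto).
  assert (Tb : forall T, tiling n T -> tiling n (sb T)) by (intros; apply act_tiling_ok; auto).
  assert (Tc : forall T, tiling n T -> tiling n (sc T)) by (intros; apply act_tiling_ok; auto).
  assert (Ea : forall T T', equiv_tiling T T' -> equiv_tiling (sa T) (sa T')) by (intros; apply equiv_act; auto).
  assert (Eb : forall T T', equiv_tiling T T' -> equiv_tiling (sb T) (sb T')) by (intros; apply equiv_act; auto).
  assert (Ec : forall T T', equiv_tiling T T' -> equiv_tiling (sc T) (sc T')) by (intros; apply equiv_act; auto).
  destruct (exist_rep n (tiling n) Cand) as [L0 R0]. { auto. } { exact Hcov. }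
  destruct (parity n sa sa_sa Ta Ea (length L0) (tiling n) L0) as [L1 [R1 P1]].
  { lia. } { auto. } { intros T T' _ H _; auto. } { exact Ta. } { exact R0. }
  destruct (parity n sb sb_sb Tb Eb (length L1) (fun T => tiling n T /\ Fix sa T) L1) as [L2 [R2 P2]].
  { lia. } { intros T [H _]; auto. }
  { intros T T' [H F] H' E. split; auto. apply (FixE' n sa Ta Ea T T'); auto. }
  { intros T [H F]. split; auto. unfold Fix in *. rewrite sa_sb. apply Eb; auto. }
  { exact R1. }
  destruct (parity n sc sc_sc Tc Ec (length L2) (fun T => (tiling n T /\ Fix sa T) /\ Fix sb T) L2) as [L3 [R3 P3]].
  { lia. } { intros T [[H _] _]; auto. }
  { intros T T' [[H F] G] H' E. split; [split|]; auto. apply (FixE' n sa Ta Ea T T'); auto. apply (FixE' n sb Tb Eb T T'); auto. }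
  { intros T [[H F] G]. split; [split|]; auto. unfold Fix in *. rewrite sa_sc. apply Ec; auto.
    unfold Fix in *. rewrite sb_sc. apply Ec; auto. }
  { exact R2. }
  exists (length L0), (length L3). split; [|split].
  - apply repl_num. eapply repl_ext; [|exact R0]. intros T. tauto.
  - apply repl_num. eapply repl_ext; [|exact R3]. intros T. split.
    + intros [[[H Fa] Fb] Fc]. split; auto. intros [[sw fx] fy]. rewrite act_decomp.
      assert (X1 : equiv_tiling ((if fx then sa else fun x => x) T) T).
      { destruct fx. exact Fa. apply equiv_refl. }
      assert (Y1 : tiling n ((if fx then sa else fun x => x) T)) by (destruct fx; auto).
      assert (X2 : equiv_tiling ((if fy then sb else fun x => x) ((if fx then sa else fun x => x) T)) T).
      { destruct fy. apply (fix_step n sb); auto. exact X1. }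
      assert (Y2 : tiling n ((if fy then sb else fun x => x) ((if fx then sa else fun x => x) T))) by (destruct fy; auto).
      destruct sw. apply (fix_step n sc); auto. exact X2.
    + intros [H D]. split; [split; [split|]|]; auto.
      * exact (D (false, true, false)).
      * exact (D (false, false, true)).
      * exact (D (true, false, false)).
  - rewrite !mod2_even. rewrite P3, P2, P1. reflexivity.
Qed.
Definition posl (X : list R) := filter (fun d => if Rlt_dec 0 d then true else false) X.
Definition prd (X : list R) (c : R) := fold_right Rmax 0 (filter (fun d => if Rlt_dec d c then true else false) X).
Definition ramp (a c x : R) := Rmin 1 (Rmax 0 ((x - a) / (c - a))).
Definition Ssum (X : list R) (l : list R) (x : R) := fold_right (fun c acc => ramp (prd X c) c x + acc) 0 l.
Definition phi (X : list R) (x : R) := Ssum X (posl X) x / INR (length (posl X)).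

Lemma posl_in : forall X c, In c (posl X) <-> In c X /\ 0 < c.
Proof.
  intros X c. unfold posl. rewrite filter_In. destruct (Rlt_dec 0 c); split; intros [A B]; auto; try discriminate; tauto.
Qed.

Lemma fold_max_lt : forall l c, 0 < c -> (forall d, In d l -> d < c) -> fold_right Rmax 0 l < c.
Proof.
  induction l as [|a l IH]; intros c Hc H; simpl; auto. apply Rmax_lub_lt. apply H; simpl; auto.
  apply IH; auto. intros; apply H; simpl; auto.
Qed.
Lemma fold_max_ge : forall l d, In d l -> d <= fold_right Rmax 0 l.
Proof.
  induction l as [|a l IH]; intros d H; simpl in *. tauto. destruct H as [E|H].
  subst. apply Rmax_l. eapply Rle_trans; [apply IH; auto|apply Rmax_r].
Qed.
Lemma fold_max_nn : forall l, 0 <= fold_right Rmax 0 l.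
Proof. induction l; simpl. lra. eapply Rle_trans; [exact IHl|apply Rmax_r]. Qed.

Lemma prd_lt : forall X c, 0 < c -> prd X c < c.
Proof.
  intros X c Hc. unfold prd. apply fold_max_lt; auto. intros d Hd. apply filter_In in Hd.
  destruct Hd as [_ Hd]. destruct (Rlt_dec d c); auto; discriminate.
Qed.
Lemma prd_ge : forall X c d, In d X -> d < c -> d <= prd X c.
Proof.
  intros X c d Hd Hdc. unfold prd. apply fold_max_ge. apply filter_In. split; auto.
  destruct (Rlt_dec d c); auto.
Qed.
Lemma prd_nn : forall X c, 0 <= prd X c.
Proof. intros; apply fold_max_nn. Qed.

Lemma Rmax0_lip : forall u v, Rabs (Rmax 0 u - Rmax 0 v) <= Rabs (u - v).
Proof. intros u v. unfold Rmax. destruct (Rle_dec 0 u), (Rle_dec 0 v); split_Rabs; lra. Qed.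
Lemma Rmin1_lip : forall u v, Rabs (Rmin 1 u - Rmin 1 v) <= Rabs (u - v).
Proof. intros u v. unfold Rmin. destruct (Rle_dec 1 u), (Rle_dec 1 v); split_Rabs; lra. Qed.

Lemma ramp_lip : forall a c x y, a < c -> Rabs (ramp a c x - ramp a c y) <= Rabs (x - y) / (c - a).
Proof.
  intros a c x y H. unfold ramp. eapply Rle_trans; [apply Rmin1_lip|]. eapply Rle_trans; [apply Rmax0_lip|].
  replace ((x - a) / (c - a) - (y - a) / (c - a)) with ((x - y) / (c - a)) by (field; lra).
  unfold Rdiv. rewrite Rabs_mult. rewrite (Rabs_right (/ (c - a))). lra.
  apply Rle_ge. apply Rlt_le. apply Rinv_0_lt_compat. lra.
Qed.

Lemma ramp_range : forall a c x, 0 <= ramp a c x <= 1.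
Proof. intros. unfold ramp, Rmin, Rmax. repeat destruct Rle_dec; lra. Qed.
Lemma ramp_lo : forall a c x, a < c -> x <= a -> ramp a c x = 0.
Proof.
  intros a c x H Hx. unfold ramp. assert ((x - a) / (c - a) <= 0).
  { unfold Rdiv. assert (0 < / (c - a)) by (apply Rinv_0_lt_compat; lra). nra. }
  rewrite Rmax_left by lra. rewrite Rmin_right by lra. auto.
Qed.
Lemma ramp_hi : forall a c x, a < c -> c <= x -> ramp a c x = 1.
Proof.
  intros a c x H Hx. unfold ramp. assert (1 <= (x - a) / (c - a)).
  { apply (Rmult_le_reg_r (c - a)). lra. unfold Rdiv. rewrite Rmult_assoc, Rinv_l by lra. lra. }
  rewrite Rmax_right by lra. rewrite Rmin_left by lra. auto.
Qed.
Lemma ramp_mid : forall a c x, a <= x <= c -> a < c -> ramp a c x = (x - a) / (c - a).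
Proof.
  intros a c x Hx H. unfold ramp.
  assert (0 <= (x - a) / (c - a)) by (unfold Rdiv; apply Rmult_le_pos; [lra|apply Rlt_le, Rinv_0_lt_compat; lra]).
  assert ((x - a) / (c - a) <= 1).
  { apply (Rmult_le_reg_r (c - a)). lra. unfold Rdiv. rewrite Rmult_assoc, Rinv_l by lra. lra. }
  rewrite Rmax_right by lra. rewrite Rmin_right by lra. auto.
Qed.
Lemma ramp_mono : forall a c x y, a < c -> x <= y -> ramp a c x <= ramp a c y.
Proof.
  intros a c x y H Hxy. unfold ramp. apply Rle_min_compat_l. apply Rle_max_compat_l.
  unfold Rdiv. apply Rmult_le_compat_r. apply Rlt_le, Rinv_0_lt_compat; lra. lra.
Qed.
Lemma ramp_strict : forall a c x y, a < c -> a <= x -> x < c -> x < y -> ramp a c x < ramp a c y.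
Proof.
  intros a c x y H1 H2 H3 H4. rewrite (ramp_mid a c x) by lra.
  assert ((x - a) / (c - a) < 1).
  { apply (Rmult_lt_reg_r (c - a)). lra. unfold Rdiv. rewrite Rmult_assoc, Rinv_l by lra. lra. }
  destruct (Rle_dec c y). rewrite ramp_hi by lra. lra.
  rewrite ramp_mid by lra. unfold Rdiv. apply Rmult_lt_compat_r. apply Rinv_0_lt_compat; lra. lra.
Qed.

Section S.
End S.

Lemma Ssum_mono : forall X l x y, (forall c, In c l -> 0 < c) -> x <= y -> Ssum X l x <= Ssum X l y.
Proof.
  intros X l x y Hl Hxy. induction l as [|c l IH]; simpl. lra.
  apply Rplus_le_compat. apply ramp_mono; auto. apply prd_lt; apply Hl; simpl; auto.
  apply IH. intros; apply Hl; simpl; auto.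
Qed.

Lemma Ssum_strict : forall X l x y c, (forall c, In c l -> 0 < c) -> In c l -> prd X c <= x -> x < c -> x < y ->
  Ssum X l x < Ssum X l y.
Proof.
  intros X l x y c Hl Hc H1 H2 H3. induction l as [|a l IH]; simpl in *. tauto.
  destruct Hc as [E|Hc].
  - subst a. apply Rplus_lt_le_compat. apply ramp_strict; auto. apply prd_lt; auto.
    apply Ssum_mono. intros; apply Hl; auto. lra.
  - apply Rplus_le_lt_compat. apply ramp_mono. apply prd_lt; auto. lra. apply IH; auto.
Qed.

Lemma Ssum_lip : forall X l, (forall c, In c l -> 0 < c) -> exists K, 0 <= K /\
  forall x y, Rabs (Ssum X l x - Ssum X l y) <= K * Rabs (x - y).
Proof.
  intros X l Hl. induction l as [|c l IH]; simpl.
  - exists 0. split. lra. intros. rewrite Rminus_0_r, Rabs_R0. lra.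
  - destruct IH as [K [HK H]]. intros; apply Hl; simpl; auto.
    assert (Pc : prd X c < c) by (apply prd_lt; apply Hl; simpl; auto).
    exists (K + / (c - prd X c)). split.
    + apply Rplus_le_le_0_compat; auto. apply Rlt_le, Rinv_0_lt_compat; lra.
    + intros x y. replace (ramp (prd X c) c x + Ssum X l x - (ramp (prd X c) c y + Ssum X l y)) with
        ((ramp (prd X c) c x - ramp (prd X c) c y) + (Ssum X l x - Ssum X l y)) by ring.
      eapply Rle_trans. apply Rabs_triang. pose proof (ramp_lip (prd X c) c x y Pc). specialize (H x y).
      unfold Rdiv in H0. lra.
Qed.

Lemma Ssum_at : forall X l x, (forall c, In c l -> 0 < c) -> In x X ->
  Ssum X l x = INR (length (filter (fun c => if Rle_dec c x then true else false) l)).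
Proof.
  intros X l x Hl Hx. induction l as [|c l IH]; simpl. auto.
  assert (Pc : prd X c < c) by (apply prd_lt; apply Hl; simpl; auto).
  rewrite IH by (intros; apply Hl; simpl; auto).
  destruct (Rle_dec c x).
  - rewrite ramp_hi by auto. simpl length. rewrite S_INR. ring.
  - rewrite ramp_lo; auto. ring. apply prd_ge; auto. lra.
Qed.
Lemma fold_max_le : forall l b, 0 <= b -> (forall d, In d l -> d <= b) -> fold_right Rmax 0 l <= b.
Proof.
  induction l as [|a l IH]; intros b Hb H; simpl; auto. apply Rmax_lub. apply H; simpl; auto.
  apply IH; auto. intros; apply H; simpl; auto.
Qed.

Lemma exists_min_above : forall (X : list R) x, (exists d, In d X /\ x < d) ->
  exists c, In c X /\ x < c /\ forall d, In d X -> x < d -> c <= d.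
Proof.
  induction X as [|a X IH]; intros x [d [Hd Hxd]]. destruct Hd.
  destruct (classic (exists d, In d X /\ x < d)) as [Ex|Nex].
  - destruct (IH x Ex) as [c [Hc [Hxc Hm]]].
    destruct (Rlt_dec x a) as [Ha|Ha].
    + destruct (Rle_dec a c).
      * exists a. split; simpl; auto. split; auto. intros d' [E|Hd'] Hx. subst; lra. specialize (Hm d' Hd' Hx). lra.
      * exists c. split; simpl; auto. split; auto. intros d' [E|Hd'] Hx. subst; lra. auto.
    + exists c. split; simpl; auto. split; auto. intros d' [E|Hd'] Hx. subst; lra. auto.
  - destruct Hd as [E|Hd]; [|exfalso; apply Nex; eauto]. subst d.
    exists a. split; simpl; auto. split; auto. intros d' [E|Hd'] Hx. subst; lra. exfalso; apply Nex; eauto.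
Qed.

Section PhiProps.
End PhiProps.

Definition Xok (X : list R) := In 0 X /\ In 1 X /\ forall d, In d X -> 0 <= d <= 1.

Lemma posl_pos : forall X c, In c (posl X) -> 0 < c.
Proof. intros X c H. apply posl_in in H. tauto. Qed.

Lemma N_pos : forall X, Xok X -> 0 < INR (length (posl X)).
Proof.
  intros X [_ [H1 _]]. apply lt_0_INR. destruct (posl X) eqn:E. assert (In 1 (posl X)) by (apply posl_in; split; auto; lra).
  rewrite E in H. destruct H. simpl; lia.
Qed.

Lemma phi_0 : forall X, Xok X -> phi X 0 = 0.
Proof.
  intros X HX. unfold phi. assert (Ssum X (posl X) 0 = 0).
  { generalize (posl_pos X). induction (posl X) as [|c l IH]; intros Hp; simpl. auto.
    rewrite IH by (intros; apply Hp; simpl; auto). rewrite ramp_lo. ring. apply prd_lt. apply Hp; simpl; auto.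
    apply prd_nn. }
  rewrite H. unfold Rdiv. ring.
Qed.

Lemma phi_1 : forall X, Xok X -> phi X 1 = 1.
Proof.
  intros X HX. unfold phi. assert (Ssum X (posl X) 1 = INR (length (posl X))).
  { assert (Hp : forall c, In c (posl X) -> 0 < c <= 1).
    { intros c Hc. apply posl_in in Hc. destruct Hc. destruct HX as [_ [_ H3]]. specialize (H3 c H). lra. }
    induction (posl X) as [|c l IH]; simpl. auto.
    rewrite IH by (intros; apply Hp; simpl; auto). rewrite ramp_hi. destruct (length l); simpl; ring.
    apply prd_lt. apply Hp; simpl; auto. apply Hp; simpl; auto. }
  rewrite H. field. apply Rgt_not_eq. apply N_pos; auto.
Qed.

Lemma phi_strict : forall X x y, Xok X -> 0 <= x -> x < y -> y <= 1 -> phi X x < phi X y.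
Proof.
  intros X x y HX Hx Hxy Hy. unfold phi. apply Rmult_lt_compat_r. apply Rinv_0_lt_compat, N_pos; auto.
  destruct (exists_min_above X x) as [c [Hc [Hxc Hm]]]. exists 1. split. apply HX. lra.
  apply (Ssum_strict X (posl X) x y c). apply posl_pos. apply posl_in; split; auto; lra.
  unfold prd. apply fold_max_le; auto. intros d Hd. apply filter_In in Hd. destruct Hd as [Hd Hdc].
  destruct (Rlt_dec d c); [|discriminate]. destruct (Rle_dec d x); auto. specialize (Hm d Hd ltac:(lra)). lra.
  auto. auto.
Qed.

Lemma phi_cont : forall X, Xok X -> cI (phi X) 0 1.
Proof.
  intros X HX. destruct (Ssum_lip X (posl X) (posl_pos X)) as [K [HK H]].
  pose proof (N_pos X HX) as HN.
  intros t Ht eps He. exists (eps / (K + 1)). split. apply Rdiv_lt_0_compat; lra.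
  intros s Hs Hts. unfold phi. unfold Rdiv.
  replace (Ssum X (posl X) t * / INR (length (posl X)) - Ssum X (posl X) s * / INR (length (posl X)))
    with ((Ssum X (posl X) t - Ssum X (posl X) s) * / INR (length (posl X))) by ring.
  rewrite Rabs_mult. rewrite (Rabs_right (/ _)) by (apply Rle_ge, Rlt_le, Rinv_0_lt_compat; auto).
  assert (HNi : / INR (length (posl X)) <= 1).
  { assert (1 <= INR (length (posl X))). { destruct (length (posl X)) as [|m] eqn:E. simpl in HN; lra. rewrite S_INR. pose proof (pos_INR m). lra. }
    rewrite <- Rinv_1. apply Rinv_le_contravar; lra. }
  specialize (H t s).
  assert (K * Rabs (t - s) <= (K + 1) * Rabs (t - s)) by (pose proof (Rabs_pos (t - s)); nra).
  assert ((K + 1) * Rabs (t - s) < eps).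
  { unfold Rdiv in Hts. apply (Rmult_lt_compat_l (K + 1)) in Hts; [|lra]. rewrite <- Rmult_assoc, Rinv_r_simpl_m in Hts by lra.
    replace ((K + 1) * eps * / (K + 1)) with eps in Hts by (field; lra). lra. }
  assert (0 <= Rabs (Ssum X (posl X) t - Ssum X (posl X) s)) by apply Rabs_pos.
  pose proof (Rinv_0_lt_compat _ HN). nra.
Qed.

Definition grid (m : nat) : list R :=
  flat_map (fun N => map (fun i => INR i / INR N) (seq 0 (S N))) (seq 1 m).

Lemma phi_grid : forall X x, Xok X -> In x X -> In (phi X x) (grid (length X)).
Proof.
  intros X x HX Hx. unfold phi. rewrite Ssum_at; auto; [|apply posl_pos].
  unfold grid. apply in_flat_map. exists (length (posl X)). split.
  - apply in_seq. pose proof (N_pos X HX). assert (0 < length (posl X))%nat by (apply INR_lt; simpl; lra).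
    assert (length (posl X) <= length X)%nat by apply filter_length_le. lia.
  - apply in_map_iff. eexists. split. reflexivity. apply in_seq. split. lia. simpl.
    assert (length (filter (fun c : R => if Rle_dec c x then true else false) (posl X)) <= length (posl X))%nat by apply filter_length_le. lia.
Qed.

Definition mono01 (phi : R -> R) := cI phi 0 1 /\ phi 0 = 0 /\ phi 1 = 1 /\
  forall x y, 0 <= x -> x < y -> y <= 1 -> phi x < phi y.

Lemma phi_mono01 : forall X, Xok X -> mono01 (phi X).
Proof.
  intros X HX. split. apply phi_cont; auto. split. apply phi_0; auto. split. apply phi_1; auto.
  intros; apply phi_strict; auto.
Qed.

Lemma mono01_le : forall f x y, mono01 f -> 0 <= x <= 1 -> 0 <= y <= 1 -> (f x <= f y <-> x <= y).
Proof.
  intros f x y [_ [_ [_ H]]] Hx Hy. split.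
  - intros Hf. destruct (Rle_dec x y); auto. specialize (H y x ltac:(lra) ltac:(lra) ltac:(lra)). lra.
  - intros Hxy. destruct (Req_dec x y). subst; lra. specialize (H x y ltac:(lra) ltac:(lra) ltac:(lra)). lra.
Qed.
Lemma mono01_lt : forall f x y, mono01 f -> 0 <= x <= 1 -> 0 <= y <= 1 -> (f x < f y <-> x < y).
Proof.
  intros f x y Hf Hx Hy. split.
  - intros H. destruct (Rlt_dec x y); auto. assert (y <= x) by lra. apply (mono01_le f y x Hf Hy Hx) in H0. lra.
  - intros H. destruct Hf as [_ [_ [_ Hs]]]. apply Hs; lra.
Qed.
Lemma mono01_range : forall f x, mono01 f -> 0 <= x <= 1 -> 0 <= f x <= 1.
Proof.
  intros f x Hf Hx. pose proof (proj2 (mono01_le f 0 x Hf ltac:(lra) Hx) (proj1 Hx)).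
  pose proof (proj2 (mono01_le f x 1 Hf Hx ltac:(lra)) (proj2 Hx)).
  destruct Hf as [_ [F0 [F1 _]]]. lra.
Qed.

Lemma mono01_inv : forall f, mono01 f -> exists g, mono01 g /\
  (forall y, 0 <= y <= 1 -> 0 <= g y <= 1 /\ f (g y) = y) /\ (forall x, 0 <= x <= 1 -> g (f x) = x).
Proof.
  intros f Hf.
  assert (EX : forall y, exists x, 0 <= y <= 1 -> 0 <= x <= 1 /\ f x = y).
  { intros y. destruct (Rle_dec 0 y); [destruct (Rle_dec y 1)|].
    - destruct Hf as [C [H0 [H1 _]]]. destruct (IVT_cI f 0 1 y) as [x [Hx Ex]]; auto. lra.
      rewrite H0, H1, Rmin_left, Rmax_right; lra. exists x. auto.
    - exists 0. intros; lra.
    - exists 0. intros; lra. }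
  set (g := fun y => proj1_sig (constructive_indefinite_description _ (EX y))).
  assert (Hg : forall y, 0 <= y <= 1 -> 0 <= g y <= 1 /\ f (g y) = y).
  { intros y Hy. unfold g. destruct (constructive_indefinite_description _ (EX y)) as [x Hx]. simpl. auto. }
  assert (Hgf : forall x, 0 <= x <= 1 -> g (f x) = x).
  { intros x Hx. pose proof (mono01_range f x Hf Hx) as R. destruct (Hg (f x) R) as [A B].
    destruct (Rle_dec (g (f x)) x); destruct (Rle_dec x (g (f x))); try lra.
    - assert (g (f x) < x) by lra. apply (mono01_lt f) in H; auto. lra.
    - assert (x < g (f x)) by lra. apply (mono01_lt f) in H; auto. lra. }
  exists g. split; [|split; auto].
  destruct Hf as [C [H0 [H1 S]]].
  assert (Hf : mono01 f) by (split; auto).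
  split; [|split; [|split]].
  - intros y Hy eps He. destruct (Hg y Hy) as [Ry Ey].
    set (x := g y) in *.
    assert (D1 : exists d1, 0 < d1 /\ (x + eps/2 <= 1 -> d1 <= f (x + eps/2) - y)).
    { destruct (Rle_dec (x + eps/2) 1). exists (f (x + eps/2) - y). split; [|lra].
      rewrite <- Ey. assert (f x < f (x + eps/2)) by (apply S; lra). lra. exists 1. split; intros; lra. }
    assert (D2 : exists d2, 0 < d2 /\ (0 <= x - eps/2 -> d2 <= y - f (x - eps/2))).
    { destruct (Rle_dec 0 (x - eps/2)). exists (y - f (x - eps/2)). split; [|lra].
      rewrite <- Ey. assert (f (x - eps/2) < f x) by (apply S; lra). lra. exists 1. split; intros; lra. }
    destruct D1 as [d1 [Hd1 Ed1]]. destruct D2 as [d2 [Hd2 Ed2]].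
    exists (Rmin d1 d2). split. apply Rmin_glb_lt; auto.
    intros y' Hy' Hyy. destruct (Hg y' Hy') as [Ry' Ey']. set (x' := g y') in *.
    pose proof (Rmin_l d1 d2). pose proof (Rmin_r d1 d2). apply Rabs_def2 in Hyy.
    apply Rabs_def1.
    + destruct (Rle_dec (x - x') (eps / 2)); [lra|]. exfalso.
      assert (Hx' : x' <= x - eps/2) by lra.
      assert (f x' <= f (x - eps/2)) by (apply (mono01_le f); auto; lra).
      specialize (Ed2 ltac:(lra)). lra.
    + destruct (Rle_dec (x' - x) (eps / 2)); [lra|]. exfalso.
      assert (Hx' : x + eps/2 <= x') by lra.
      assert (f (x + eps/2) <= f x') by (apply (mono01_le f); auto; lra).
      specialize (Ed1 ltac:(lra)). lra.
  - assert (E0 : g (f 0) = 0) by (apply Hgf; lra). rewrite H0 in E0. exact E0.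
  - assert (E0 : g (f 1) = 1) by (apply Hgf; lra). rewrite H1 in E0. exact E0.
  - intros a b Ha Hab Hb. destruct (Hg a ltac:(lra)) as [Ra Ea]. destruct (Hg b ltac:(lra)) as [Rb Eb].
    apply (mono01_lt f); auto. rewrite Ea, Eb; auto.
Qed.
Definition nrect (f1 f2 : R -> R) (r : rect) : rect := mkRect (f1 (rx0 r)) (f1 (rx1 r)) (f2 (ry0 r)) (f2 (ry1 r)).
Definition pmap (f1 f2 : R -> R) (p : pt) : pt := (f1 (fst p), f2 (snd p)).

Lemma nrect_in : forall f1 f2 r p, mono01 f1 -> mono01 f2 -> good r -> in_sq p ->
  (in_rect (nrect f1 f2 r) (pmap f1 f2 p) <-> in_rect r p).
Proof.
  intros f1 f2 r p H1 H2 G [Sx Sy]. unfold good in G. unfold in_rect, nrect, pmap; simpl.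
  rewrite !(mono01_le f1) by (auto; lra). rewrite !(mono01_le f2) by (auto; lra). tauto.
Qed.
Lemma nrect_int : forall f1 f2 r p, mono01 f1 -> mono01 f2 -> good r -> in_sq p ->
  (in_interior (nrect f1 f2 r) (pmap f1 f2 p) <-> in_interior r p).
Proof.
  intros f1 f2 r p H1 H2 G [Sx Sy]. unfold good in G. unfold in_interior, nrect, pmap; simpl.
  rewrite !(mono01_lt f1) by (auto; lra). rewrite !(mono01_lt f2) by (auto; lra). tauto.
Qed.

Lemma pmap_sq : forall f1 f2 p, mono01 f1 -> mono01 f2 -> in_sq p -> in_sq (pmap f1 f2 p).
Proof. intros f1 f2 p H1 H2 [A B]. split; simpl; apply mono01_range; auto. Qed.

Lemma pmap_cont : forall f1 f2, mono01 f1 -> mono01 f2 -> cont_on_sq (pmap f1 f2).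
Proof.
  intros f1 f2 [C1 _] [C2 _] p [Sx Sy] eps He.
  destruct (C1 (fst p) Sx eps He) as [d1 [Hd1 H1]]. destruct (C2 (snd p) Sy eps He) as [d2 [Hd2 H2]].
  exists (Rmin d1 d2). split. apply Rmin_glb_lt; auto. intros q [Qx Qy] Hpq.
  apply dist2_lt; simpl.
  - apply H1; auto. eapply Rle_lt_trans; [apply dist2_fst|]. eapply Rlt_le_trans; [exact Hpq|apply Rmin_l].
  - apply H2; auto. eapply Rle_lt_trans; [apply dist2_snd|]. eapply Rlt_le_trans; [exact Hpq|apply Rmin_r].
Qed.

Lemma prod_equiv : forall n T f1 f2, mono01 f1 -> mono01 f2 -> tiling n T ->
  tiling n (map (nrect f1 f2) T) /\ equiv_tiling T (map (nrect f1 f2) T).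
Proof.
  intros n T f1 f2 M1 M2 HT.
  destruct (mono01_inv f1 M1) as [g1 [N1 [G1 F1]]]. destruct (mono01_inv f2 M2) as [g2 [N2 [G2 F2]]].
  set (F := pmap f1 f2). set (G := pmap g1 g2).
  assert (GS : forall q, in_sq q -> in_sq (G q)) by (intros; apply pmap_sq; auto).
  assert (FG : forall q, in_sq q -> F (G q) = q).
  { intros q [A B]. unfold F, G, pmap; simpl. rewrite (proj2 (G1 _ A)), (proj2 (G2 _ B)). destruct q; auto. }
  assert (GF : forall p, in_sq p -> G (F p) = p).
  { intros p [A B]. unfold F, G, pmap; simpl. rewrite F1, F2 by auto. destruct p; auto. }
  assert (NG : forall r, good r -> good (nrect f1 f2 r)).
  { intros r Gr. pose proof Gr as Gr'. unfold good in Gr. unfold good, nrect; simpl.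
    pose proof (mono01_range f1 (rx0 r) M1 ltac:(lra)). pose proof (mono01_range f1 (rx1 r) M1 ltac:(lra)).
    pose proof (mono01_range f2 (ry0 r) M2 ltac:(lra)). pose proof (mono01_range f2 (ry1 r) M2 ltac:(lra)).
    destruct M1 as [_ [_ [_ S1]]]. destruct M2 as [_ [_ [_ S2]]].
    assert (f1 (rx0 r) < f1 (rx1 r)) by (apply S1; lra). assert (f2 (ry0 r) < f2 (ry1 r)) by (apply S2; lra). lra. }
  assert (NI : forall r q, good r -> in_sq q -> (in_rect (nrect f1 f2 r) q <-> in_rect r (G q))).
  { intros r q Gr Sq. rewrite <- (FG q Sq) at 1. apply nrect_in; auto. }
  assert (NN : forall r q, good r -> in_sq q -> (in_interior (nrect f1 f2 r) q <-> in_interior r (G q))).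
  { intros r q Gr Sq. rewrite <- (FG q Sq) at 1. apply nrect_int; auto. }
  destruct HT as [L [Gd [Cv Dj]]].
  split.
  - split; [|split; [|split]].
    + rewrite length_map; auto.
    + intros r' Hr'. apply in_map_iff in Hr'. destruct Hr' as [r [E Hr]]. subst. apply NG. apply Gd; auto.
    + intros q Sq. destruct (Cv (G q) (GS q Sq)) as [r [Hr Hin]]. exists (nrect f1 f2 r). split. apply in_map; auto.
      apply NI; auto. apply Gd; auto.
    + intros i j d Hi Hj Hij q [X Y]. rewrite length_map in Hi, Hj.
      rewrite (@nth_indep _ (map (nrect f1 f2) T) i d (nrect f1 f2 d)) in X by (rewrite length_map; auto).
      rewrite (@nth_indep _ (map (nrect f1 f2) T) j d (nrect f1 f2 d)) in Y by (rewrite length_map; auto).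
      rewrite map_nth in X, Y.
      assert (Gi : good (nth i T d)) by (apply Gd; apply nth_In; auto).
      assert (Gj : good (nth j T d)) by (apply Gd; apply nth_In; auto).
      assert (Sq : in_sq q) by (apply (rect_in_sq (nrect f1 f2 (nth i T d))); [apply NG; auto|apply int_in_rect; auto]).
      apply NN in X; auto. apply NN in Y; auto. apply (Dj i j d Hi Hj Hij (G q)). auto.
  - apply equiv_unfold. exists F. split; [|split; [|split; [|split]]].
    + split. intros p Sp. apply pmap_sq; auto. split. apply pmap_cont; auto.
      exists G. split. auto. split. apply pmap_cont; auto. split; auto.
    + destruct M1 as [_ [A0 [A1 _]]]. destruct M2 as [_ [B0 [B1 _]]].
      unfold fixes_corners, F, pmap; simpl. rewrite A0, A1, B0, B1. auto.
    + intros r Hr. exists (nrect f1 f2 r). split. apply in_map; auto. intros q. split.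
      * intros Hq. assert (Sq : in_sq q) by exact (rect_in_sq (nrect f1 f2 r) q (NG r (Gd r Hr)) Hq).
        exists (G q). split. apply NI; auto. apply Gd; auto. apply FG; auto.
      * intros [p [Hp Ep]]. subst q. apply nrect_in; auto. exact (Gd r Hr). exact (rect_in_sq r p (Gd r Hr) Hp).
    + intros p q _ _ E _. unfold F, pmap; simpl. rewrite E; auto.
    + intros p q _ _ E _. unfold F, pmap; simpl. rewrite E; auto.
Qed.

Fixpoint lists (k : nat) (S : list rect) : list (list rect) :=
  match k with
  | O => [[]]
  | Datatypes.S k' => flat_map (fun r => map (cons r) (lists k' S)) S
  end.

Lemma lists_in : forall S l, (forall r, In r l -> In r S) -> In l (lists (length l) S).
Proof.
  intros S. induction l as [|a l IH]; intros H; simpl. auto.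
  apply in_flat_map. exists a. split. apply H; simpl; auto. apply in_map. apply IH. intros; apply H; simpl; auto.
Qed.

Definition rects_over (V : list R) : list rect :=
  flat_map (fun a => flat_map (fun b => flat_map (fun c => map (fun d => mkRect a b c d) V) V) V) V.

Lemma rects_over_in : forall V a b c d, In a V -> In b V -> In c V -> In d V -> In (mkRect a b c d) (rects_over V).
Proof.
  intros V a b c d Ha Hb Hc Hd. unfold rects_over.
  apply in_flat_map. exists a. split; auto. apply in_flat_map. exists b. split; auto.
  apply in_flat_map. exists c. split; auto. apply in_map; auto.
Qed.

Lemma xs_len : forall T, length (xs T) = (2 * length T)%nat.
Proof. induction T; simpl; auto. unfold xs in *. simpl. rewrite IHT. lia. Qed.
Lemma ys_len : forall T, length (ys T) = (2 * length T)%nat.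
Proof. induction T; simpl; auto. unfold ys in *. simpl. rewrite IHT. lia. Qed.

Lemma coverage : forall n, exists Cand, forall T, tiling n T -> exists c, In c Cand /\ tiling n c /\ equiv_tiling T c.
Proof.
  intros n. exists (lists n (rects_over (grid (2 + 2 * n)))). intros T HT.
  set (X := 0 :: 1 :: xs T). set (Y := 0 :: 1 :: ys T).
  assert (XO : Xok X).
  { split. simpl; auto. split. simpl; auto. intros d [E|[E|Hd]]; try (subst; lra).
    unfold xs in Hd. apply in_flat_map in Hd. destruct Hd as [r [Hr Hd]]. pose proof (til_good n T r HT Hr) as G.
    unfold good in G. simpl in Hd. destruct Hd as [E|[E|[]]]; subst; lra. }
  assert (YO : Xok Y).
  { split. simpl; auto. split. simpl; auto. intros d [E|[E|Hd]]; try (subst; lra).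
    unfold ys in Hd. apply in_flat_map in Hd. destruct Hd as [r [Hr Hd]]. pose proof (til_good n T r HT Hr) as G.
    unfold good in G. simpl in Hd. destruct Hd as [E|[E|[]]]; subst; lra. }
  destruct (prod_equiv n T (phi X) (phi Y) (phi_mono01 X XO) (phi_mono01 Y YO) HT) as [T1 E1].
  exists (map (nrect (phi X) (phi Y)) T). split; [|split; auto].
  destruct HT as [L _]. replace n with (length (map (nrect (phi X) (phi Y)) T)) at 1 by (rewrite length_map; auto).
  apply lists_in. intros r' Hr'. apply in_map_iff in Hr'. destruct Hr' as [r [E Hr]]. subst r'.
  assert (LX : length X = (2 + 2 * n)%nat) by (unfold X; simpl; rewrite xs_len; lia).
  assert (LY : length Y = (2 + 2 * n)%nat) by (unfold Y; simpl; rewrite ys_len; lia).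
  assert (IX : forall v, In v [rx0 r; rx1 r] -> In v X).
  { intros v Hv. unfold X. right. right. unfold xs. apply in_flat_map. exists r. auto. }
  assert (IY : forall v, In v [ry0 r; ry1 r] -> In v Y).
  { intros v Hv. unfold Y. right. right. unfold ys. apply in_flat_map. exists r. auto. }
  unfold nrect. apply rects_over_in.
  - rewrite <- LX. apply phi_grid; auto. apply IX; simpl; auto.
  - rewrite <- LX. apply phi_grid; auto. apply IX; simpl; auto.
  - rewrite <- LY. apply phi_grid; auto. apply IY; simpl; auto.
  - rewrite <- LY. apply phi_grid; auto. apply IY; simpl; auto.
Qed.

Theorem lemma9 : forall n : nat, (1 <= n)%nat ->
  exists t s : nat, is_t n t /\ is_s n s /\ Nat.modulo s 2 = Nat.modulo t 2.
Proof.
  intros n _. destruct (coverage n) as [Cand H]. apply (main_from_cov n Cand H).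
Qed.
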